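(* Let $\gamma>1$ be a real number such that $\gamma\ne\psi_L^r$ for every $r\in\mathbb{Q}$ and every admissible tuple $L$, where $\psi_L$ is the dominant zero associated with $L$. Let $K_n=\lfloor\gamma^n\rfloor$. Then $K$ satisfies absolute Benford's Law.
   Context: An admissible tuple is $L=(a_1,\dots,a_N)\in\mathbb{N}_0^N$ with $N\ge2$, $a_1>0$; $\psi_L$ is the unique positive real zero of $x^N-\sum_{k=1}^{N-1}a_kx^{N-k}-(1+a_N)$ and $\theta=\psi_L^{-1}$. For such $L$: $\Theta=(a_1,\dots,a_N,a_1,\dots,a_N,\dots)$; $\mathcal H^\circ$ is the set of finite tuples $\epsilon$ (length $n$, empty tuple included) such that either $\epsilon=\Theta|n$ or there is $0\le s<n$ with $(\epsilon(1),\dots,\epsilon(s))=\Theta|s$, $\epsilon(s+1)<\Theta(s+1)$ and $(\epsilon(s+2),\dots,\epsilon(n))\in\mathcal H^\circ$; $\mathcal H=\{\epsilon\in\mathcal H^\circ:\epsilon(1)>0\}$. $H$: $H_n=1+\sum_{k=1}^{n-1}a_kH_{n-k}$ ($1\le n\le N+1$), $H_{n+N}=a_1H_{n+N-1}+\dots+a_{N-1}H_{n+1}+(1+a_N)H_n$; each $m\in\mathbb{N}$ is uniquely $m=\sum_{k=1}^M\epsilon(k)H_{M-k+1}$ with $\epsilon\in\mathcal H$ of length $M$. $\mathrm{LB}_s(m)$ is $(\epsilon(1),\dots,\epsilon(s))$ if $N\le s\le M$, $(\epsilon(1),\dots,\epsilon(s),0,\dots,0)$ (length $N$) if $s<N$,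 $s\le M$, undefined if $s>M$. $\mathcal H_s$: the set of values of $\mathrm{LB}_s$, listed $\mathbf b_1,\dots,\mathbf b_\ell$ lexicographically; exclusive block $\mathbf b_{\ell+1}$: if $s\ge N$, $s\equiv p\pmod N$, $0\le p<N$, its first $s-p$ entries are $\Theta|(s-p)$ with the last of these replaced by $1+a_N$ and its last $p$ entries are $0$; if $s<N$, $\mathbf b_{\ell+1}=(a_1,\dots,a_{N-1},1+a_N)$; $\widetilde{\mathbf b_k}=\mathbf b_{k+1}$; $\mathbf b\cdot\widehat H=\sum_k\mathbf b(k)\theta^{k-1}$. $K$ satisfies strong Benford's Law under $\mathcal H$-expansion if for all $s\in\mathbb{N}$ and $\mathbf b\in\mathcal H_s$, $\lim_n\#\{k\le n:\mathrm{LB}_s(K_k)=\mathbf b\}/n=\log_{\psi_L}(\widetilde{\mathbf b}\cdot\widehat H/\mathbf b\cdot\widehat H)$. $K$ satisfies absolute Benford's Law if it satisfies strong Benford's Law under $\mathcal H$-expansion for every admissible $L$. *)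

(* Defs.v *)
From Stdlib Require Import Reals Lra Lia List Arith ZArith QArith Qreals ClassicalEpsilon.
Import ListNotations.
Open Scope R_scope.

(* A tuple L = (a_1,...,a_N) is a list; a_k = nth (k-1) L 0 (1-indexed). *)
Definition acoef (L : list nat) (k : nat) : nat := nth (k - 1) L 0%nat.

Definition admissible (L : list nat) : Prop :=
  (2 <= length L)%nat /\ (0 < nth 0 L 0%nat)%nat.

Definition sumR (l : list R) : R := fold_right Rplus 0 l.

(* x is a positive real zero of x^N - sum_{k=1}^{N-1} a_k x^{N-k} - (1 + a_N);
   this zero is unique (psi_L). *)
Definition is_psi (L : list nat) (x : R) : Prop :=
  let N := length L in
  0 < x /\
  x ^ N - sumR (map (fun k => INR (acoef L k) * x ^ (N - k)) (seq 1 (N - 1)))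
    - (1 + INR (acoef L N)) = 0.

(* Theta = (a_1,...,a_N,a_1,...), 1-indexed: Theta(i) = a_{((i-1) mod N)+1} *)
Definition Theta (L : list nat) (i : nat) : nat :=
  nth ((i - 1) mod length L) L 0%nat.

Definition Theta_prefix (L : list nat) (n : nat) : list nat :=
  map (Theta L) (seq 1 n).

Inductive Hcirc (L : list nat) : list nat -> Prop :=
| Hc_prefix (n : nat) : Hcirc L (Theta_prefix L n)
| Hc_split (s c : nat) (rest : list nat) :
    (c < Theta L (s + 1))%nat -> Hcirc L rest ->
    Hcirc L (Theta_prefix L s ++ c :: rest).

Definition Hset (L : list nat) (eps : list nat) : Prop :=
  Hcirc L eps /\ (0 < hd 0%nat eps)%nat.

(* The sequence H_n, n >= 1. Given l = [H_1;...;H_{n-1}], next_H computes H_n. *)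
Definition next_H (L : list nat) (l : list nat) : nat :=
  let n := S (length l) in
  let N := length L in
  let h j := nth (j - 1) l 0%nat in
  if (n <=? N + 1)%nat then
    (1 + list_sum (map (fun k => (acoef L k * h (n - k))%nat) (seq 1 (n - 1))))%nat
  else
    (list_sum (map (fun k => (acoef L k * h (n - k))%nat) (seq 1 (N - 1)))
     + (1 + acoef L N) * h (n - N))%nat.

Fixpoint Hlist (L : list nat) (m : nat) : list nat :=
  match m with
  | O => []
  | S m' => let l := Hlist L m' in l ++ [next_H L l]
  end.

Definition Hn (L : list nat) (n : nat) : nat := nth (n - 1) (Hlist L n) 0%nat.

Definition Hvalue (L : list nat) (eps : list nat) : nat :=
  let M := length eps in
  list_sum (map (fun k => (nth (k - 1) eps 0%nat * Hn L (M - k + 1))%nat) (seq 1 M)).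

Definition is_expansion (L : list nat) (m : nat) (eps : list nat) : Prop :=
  Hset L eps /\ m = Hvalue L eps.

Definition LB (L : list nat) (s m : nat) (b : list nat) : Prop :=
  exists eps, is_expansion L m eps /\ (1 <= s <= length eps)%nat /\
    b = firstn s eps ++ repeat 0%nat (length L - s).

Definition Hs (L : list nat) (s : nat) (b : list nat) : Prop :=
  exists m, (1 <= m)%nat /\ LB L s m b.

Fixpoint lexlt (x y : list nat) : Prop :=
  match x, y with
  | a :: x', b :: y' => (a < b)%nat \/ (a = b /\ lexlt x' y')
  | _, _ => False
  end.

Definition excl_block (L : list nat) (s : nat) : list nat :=
  let N := length L in
  if (N <=? s)%nat then
    let p := (s mod N)%nat in
    removelast (Theta_prefix L (s - p)) ++ [S (acoef L N)] ++ repeat 0%nat p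
  else removelast L ++ [S (acoef L N)].

Definition succ_block (L : list nat) (s : nat) (b b' : list nat) : Prop :=
  (Hs L s b' /\ lexlt b b' /\ forall c, Hs L s c -> lexlt b c -> lexlt b' c \/ b' = c)
  \/ ((forall c, Hs L s c -> ~ lexlt b c) /\ b' = excl_block L s).

Definition dotH (theta : R) (b : list nat) : R :=
  sumR (map (fun k => INR (nth (k - 1) b 0%nat) * theta ^ (k - 1)) (seq 1 (length b))).

Definition indicator (P : Prop) : nat :=
  if excluded_middle_informative P then 1%nat else 0%nat.

Definition count_LB (L : list nat) (s : nat) (b : list nat) (K : nat -> nat) (n : nat) : nat :=
  list_sum (map (fun k => indicator (LB L s (K k) b)) (seq 1 n)).

Definition log_base (c x : R) : R := ln x / ln c.

Definition strong_benford (L : list nat) (psi : R) (K : nat -> nat) : Prop :=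
  forall (s : nat) (b b' : list nat),
    (1 <= s)%nat -> Hs L s b -> succ_block L s b b' ->
    Un_cv (fun n => INR (count_LB L s b K n) / INR n)
          (log_base psi (dotH (/ psi) b' / dotH (/ psi) b)).

Definition absolute_benford (K : nat -> nat) : Prop :=
  forall (L : list nat) (psi : R), admissible L -> is_psi L psi -> strong_benford L psi K.

Definition floor_nat (x : R) : nat := Z.to_nat (Int_part x).

(* Main.v *)
Require Import Defs.
From Stdlib Require Import Reals QArith Qreals List.
From Stdlib Require Import Lra Lia Arith ZArith ClassicalEpsilon.
Import ListNotations.
Open Scope R_scope.

Lemma Hlist_length L m : length (Hlist L m) = m.
Proof. induction m; simpl; auto. rewrite length_app, IHm; simpl; lia. Qed.

Lemma Hlist_stable0 L i k d : (i < k)%nat -> nth i (Hlist L (k + d)) 0%nat = nth i (Hlist L k) 0%nat.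
Proof.
  intros Hk. induction d. rewrite Nat.add_0_r; auto.
  replace (k + S d)%nat with (S (k + d)) by lia. simpl.
  rewrite app_nth1 by (rewrite Hlist_length; lia). auto.
Qed.

Lemma Hlist_stable L m i : (i < m)%nat -> nth i (Hlist L m) 0%nat = Hn L (S i).
Proof.
  intros Hi. unfold Hn. replace (S i - 1)%nat with i by lia.
  replace m with (S i + (m - S i))%nat by lia. apply Hlist_stable0. lia.
Qed.

Lemma Hn_S L n : Hn L (S n) = next_H L (Hlist L n).
Proof.
  unfold Hn. simpl. replace (n - 0)%nat with n by lia.
  rewrite app_nth2 by (rewrite Hlist_length; lia).
  rewrite Hlist_length, Nat.sub_diag. reflexivity.
Qed.

Definition Th L i := Theta L i.

Fixpoint Vs (L : list nat) (w : list nat) (r : nat) : nat :=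
  match w with
  | [] => 0%nat
  | d :: w' => (d * Hn L (length w' + r + 1) + Vs L w' r)%nat
  end.

Lemma Vs_app L u v r : Vs L (u ++ v) r = (Vs L u (length v + r) + Vs L v r)%nat.
Proof.
  induction u; simpl; auto. rewrite IHu, length_app.
  replace (length u + length v + r + 1)%nat with (length u + (length v + r) + 1)%nat by lia. lia.
Qed.

Lemma Vs_repeat0 L n r : Vs L (repeat 0%nat n) r = 0%nat.
Proof. induction n; simpl; auto. Qed.

Lemma Vs_pad L u n : Vs L (u ++ repeat 0%nat n) 0 = Vs L u n.
Proof. rewrite Vs_app, Vs_repeat0, repeat_length, !Nat.add_0_r; reflexivity. Qed.

Lemma Vs_map_seq L f s n r :
  Vs L (map f (seq s n)) r =
  list_sum (map (fun k => f k * Hn L (n + s + r - k))%nat (seq s n)).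
Proof.
  revert s. induction n; intros s; [reflexivity|].
  change (seq s (S n)) with (s :: seq (S s) n). cbn [map Vs list_sum].
  rewrite IHn. rewrite length_map, length_seq. cbn [list_sum fold_right]. f_equal.
  - f_equal. f_equal. lia.
  - unfold list_sum. f_equal. apply map_ext_in. intros k Hk. apply in_seq in Hk.
    f_equal. f_equal. lia.
Qed.

Lemma list_sum_map_ext (f g : nat -> nat) l :
  (forall x, In x l -> f x = g x) -> list_sum (map f l) = list_sum (map g l).
Proof. intros H. f_equal. apply map_ext_in. auto. Qed.

Lemma next_H_branch1 L n :
  (S n <= length L + 1)%nat ->
  Hn L (S n) = (1 + list_sum (map (fun k => acoef L k * Hn L (S n - k)) (seq 1 n)))%nat.
Proof.
  intros Hle. rewrite Hn_S. unfold next_H. rewrite Hlist_length.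
  replace (S n <=? length L + 1)%nat with true by (symmetry; apply Nat.leb_le; lia).
  f_equal. replace (S n - 1)%nat with n by lia.
  apply list_sum_map_ext. intros k Hk. apply in_seq in Hk.
  f_equal. rewrite Hlist_stable by lia. f_equal. lia.
Qed.

Lemma next_H_branch2 L n :
  (2 <= length L)%nat -> (length L + 1 < S n)%nat ->
  Hn L (S n) = (list_sum (map (fun k => acoef L k * Hn L (S n - k)) (seq 1 (length L - 1)))
               + (1 + acoef L (length L)) * Hn L (S n - length L))%nat.
Proof.
  intros HN Hle. rewrite Hn_S. unfold next_H. rewrite Hlist_length.
  replace (S n <=? length L + 1)%nat with false by (symmetry; apply Nat.leb_gt; lia).
  f_equal.
  - apply list_sum_map_ext. intros k Hk. apply in_seq in Hk.
    f_equal. rewrite Hlist_stable by lia. f_equal. lia.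
  - f_equal. rewrite Hlist_stable by lia. f_equal. lia.
Qed.

Lemma Th_small L k : (1 <= k <= length L)%nat -> Th L k = acoef L k.
Proof.
  intros Hk. unfold Th, Theta, acoef. f_equal. apply Nat.mod_small. lia.
Qed.

Lemma Th_period L k : (1 <= length L)%nat -> (1 <= k)%nat -> Th L (k + length L) = Th L k.
Proof.
  intros HN Hk. unfold Th, Theta. f_equal.
  replace (k + length L - 1)%nat with ((k - 1) + 1 * length L)%nat by lia.
  rewrite Nat.Div0.mod_add. reflexivity.
Qed.

Lemma Th_period_mult L k m : (1 <= length L)%nat -> (1 <= k)%nat -> Th L (k + m * length L) = Th L k.
Proof.
  intros HN Hk. induction m. rewrite Nat.add_0_r; auto.
  replace (k + S m * length L)%nat with ((k + m * length L) + length L)%nat by lia.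
  rewrite Th_period by lia. auto.
Qed.

Definition seg L j n := map (Th L) (seq (S j) n).

Lemma seg_S L j n : seg L j (S n) = Th L (S j) :: seg L (S j) n.
Proof. reflexivity. Qed.

Lemma seg_add L j a b : seg L j (a + b) = seg L j a ++ seg L (j + a) b.
Proof. unfold seg. rewrite seq_app, map_app. reflexivity. Qed.

Lemma seg_period L j n m : (1 <= length L)%nat -> seg L (j + m * length L) n = seg L j n.
Proof.
  intros HN. unfold seg. revert j. induction n; intros j; simpl; auto.
  f_equal.
  - replace (S (j + m * length L)) with (S j + m * length L)%nat by lia.
    apply Th_period_mult; lia.
  - replace (S (j + m * length L)) with (S j + m * length L)%nat by lia. apply IHn.
Qed.

Lemma Theta_prefix_seg L n : Theta_prefix L n = seg L 0 n.
Proof. reflexivity. Qed.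

Lemma H_Theta L n : (2 <= length L)%nat -> Hn L (S n) = S (Vs L (seg L 0 n) 0).
Proof.
  intros HN. induction n as [n IH] using lt_wf_ind.
  destruct (Nat.le_gt_cases n (length L)) as [Hle|Hgt].
  - rewrite next_H_branch1 by lia. unfold seg. rewrite Vs_map_seq. simpl.
    f_equal. apply list_sum_map_ext. intros k Hk. apply in_seq in Hk.
    rewrite Th_small by lia. f_equal. f_equal. destruct k; lia.
  - rewrite next_H_branch2 by lia.
    assert (Hs : seg L 0 n = seg L 0 (length L) ++ seg L 0 (n - length L)).
    { replace n with (length L + (n - length L))%nat at 1 by lia.
      rewrite seg_add. f_equal. rewrite <- (seg_period L 0 _ 1) by lia. f_equal; lia. }
    rewrite Hs, Vs_app. unfold seg at 2. rewrite length_map, length_seq, Nat.add_0_r.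
    assert (IH' := IH (n - length L)%nat ltac:(lia)).
    replace (S n - length L)%nat with (S (n - length L)) by lia.
    rewrite IH'.
    assert (A : Vs L (seg L 0 (length L)) (n - length L) =
      (list_sum (map (fun k => acoef L k * Hn L (S n - k)) (seq 1 (length L - 1)))
       + acoef L (length L) * Hn L (S (n - length L)))%nat).
    { unfold seg. rewrite Vs_map_seq.
      replace (seq 1 (length L)) with (seq 1 (length L - 1) ++ [length L]).
      2:{ replace (length L) with ((length L - 1) + 1)%nat at 3 by lia.
          rewrite seq_app. f_equal. simpl. f_equal. lia. }
      rewrite map_app, list_sum_app. cbn [map list_sum fold_right].
      rewrite Th_small by lia. f_equal.
      - apply list_sum_map_ext. intros k Hk. apply in_seq in Hk. rewrite Th_small by lia.
        f_equal. f_equal. lia.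
      - rewrite Nat.add_0_r. f_equal. f_equal. lia. }
    rewrite A, IH'. nia.
Qed.


Fixpoint acc L (j : nat) (w : list nat) : Prop :=
  match w with
  | [] => True
  | d :: w' => (d = Th L (S j) /\ acc L (S j) w') \/ ((d < Th L (S j))%nat /\ acc L 0 w')
  end.

Fixpoint run L (j : nat) (w : list nat) : nat :=
  match w with
  | [] => j
  | d :: w' => if Nat.eqb d (Th L (S j)) then run L (S j) w' else run L 0 w'
  end.

Lemma acc_app L j u v : acc L j (u ++ v) <-> acc L j u /\ acc L (run L j u) v.
Proof.
  revert j. induction u as [|d u IH]; intros j; simpl.
  - tauto.
  - destruct (Nat.eqb_spec d (Th L (S j))) as [E|E].
    + rewrite !IH. split.
      * intros [[_ H]|[H _]]; [tauto|lia].
      * intros [[[_ H1]|[H1 _]] H2]; [left; tauto| lia].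
    + rewrite !IH. split.
      * intros [[H _]|[H1 H2]]; [congruence|tauto].
      * intros [[[H _]|[H1 H2]] H3]; [congruence|right; tauto].
Qed.

Lemma acc_seg L j n : acc L j (seg L j n).
Proof. revert j; induction n; intros j; simpl; auto. Qed.

Lemma run_seg L j n : run L j (seg L j n) = (j + n)%nat.
Proof.
  revert j; induction n; intros j; simpl; [lia|].
  rewrite Nat.eqb_refl. rewrite IHn. lia.
Qed.

Lemma acc_repeat0 L j n : acc L j (repeat 0%nat n).
Proof.
  revert j; induction n; intros j; simpl; auto.
  destruct (Th L (S j)) eqn:E; [left|right]; split; auto; lia.
Qed.

Lemma acc_prefix L j u v : acc L j (u ++ v) -> acc L j u.
Proof. rewrite acc_app. tauto. Qed.

Lemma acc_pad L j u n : acc L j u -> acc L j (u ++ repeat 0%nat n).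
Proof. intros H. apply acc_app. split; auto. apply acc_repeat0. Qed.

Lemma Theta_prefix_S L j : Theta_prefix L (S j) = Theta_prefix L j ++ [Th L (S j)].
Proof. unfold Theta_prefix. rewrite seq_S, map_app. reflexivity. Qed.

Lemma Hcirc_acc L w : Hcirc L w -> acc L 0 w.
Proof.
  induction 1.
  - apply acc_seg.
  - apply acc_app. split. apply acc_seg.
    change (Theta_prefix L s) with (seg L 0 s). rewrite run_seg. simpl.
    right. split; auto. replace (s + 1)%nat with (S s) in H by lia. exact H.
Qed.

Lemma acc_Hcirc L j w : acc L j w -> Hcirc L (Theta_prefix L j ++ w).
Proof.
  revert j. induction w as [|d w IH]; intros j Hw.
  - rewrite app_nil_r. constructor.
  - destruct Hw as [[E Hw]|[E Hw]].
    + subst d. replace (Theta_prefix L j ++ Th L (S j) :: w) with (Theta_prefix L (S j) ++ w).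
      apply IH; auto. rewrite Theta_prefix_S, <- app_assoc. reflexivity.
    + apply Hc_split. replace (j + 1)%nat with (S j) by lia. exact E.
      apply (IH 0%nat Hw).
Qed.

Lemma Hcirc_iff L w : Hcirc L w <-> acc L 0 w.
Proof. split. apply Hcirc_acc. intros H. apply (acc_Hcirc L 0 w H). Qed.

Lemma seg_length L j n : length (seg L j n) = n.
Proof. unfold seg. rewrite length_map, length_seq. reflexivity. Qed.

Lemma H_pos L n : (2 <= length L)%nat -> (1 <= Hn L (S n))%nat.
Proof. intros HN. rewrite H_Theta by auto. lia. Qed.

Lemma acc_bound L j w : (2 <= length L)%nat -> acc L j w -> (Vs L w 0 <= Vs L (seg L j (length w)) 0)%nat.
Proof.
  intros HN. revert j. induction w as [|d w IH]; intros j Hw; [simpl; lia|].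
  change (length (d::w)) with (S (length w)). rewrite seg_S. cbn [Vs].
  rewrite seg_length.
  destruct Hw as [[E Hw]|[E Hw]].
  - subst d. specialize (IH _ Hw). lia.
  - specialize (IH _ Hw).
    assert (HH := H_Theta L (length w) HN).
    replace (length w + 0 + 1)%nat with (S (length w)) by lia.
    nia.
Qed.

Lemma acc_lt_H L w : (2 <= length L)%nat -> acc L 0 w -> (Vs L w 0 < Hn L (S (length w)))%nat.
Proof.
  intros HN Hw. assert (B := acc_bound L 0 w HN Hw).
  rewrite H_Theta by auto. lia.
Qed.

Lemma Vs_cmp L p d e t t' : (2 <= length L)%nat ->
  acc L 0 (p ++ d :: t) -> acc L 0 (p ++ e :: t') -> length t = length t' -> (d < e)%nat ->
  (Vs L (p ++ d :: t) 0 < Vs L (p ++ e :: t') 0)%nat.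
Proof.
  intros HN H1 H2 Hl Hde.
  rewrite !Vs_app. simpl length. rewrite Hl.
  apply acc_app in H1, H2. destruct H1 as [_ H1]. destruct H2 as [_ H2].
  set (j := run L 0 p) in *.
  assert (Hd : (d < Th L (S j))%nat /\ acc L 0 t).
  { destruct H2 as [[E _]|[E _]]; destruct H1 as [[E' _]|[E' H1']]; try lia; auto. }
  destruct Hd as [Hd Ht].
  assert (B := acc_lt_H L t HN Ht).
  simpl. rewrite <- Hl.
  replace (length t + 0 + 1)%nat with (S (length t)) by lia.
  nia.
Qed.

Lemma exists_word L : (2 <= length L)%nat -> forall n j v, (v <= Vs L (seg L j n) 0)%nat ->
  exists w, length w = n /\ acc L j w /\ Vs L w 0 = v.
Proof.
  intros HN n. induction n; intros j v Hv.
  - exists []. simpl in *. repeat split; auto. lia.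
  - rewrite seg_S in Hv. cbn [Vs] in Hv. rewrite seg_length in Hv.
    replace (n + 0 + 1)%nat with (S n) in Hv by lia.
    assert (HH := H_Theta L n HN).
    destruct (Nat.lt_ge_cases v (Th L (S j) * Hn L (S n))) as [Hlt|Hge].
    + set (h := Hn L (S n)) in *.
      assert (hpos : (0 < h)%nat) by lia.
      destruct (IHn 0%nat (v mod h)) as [w [Hl [Ha Hv']]].
      { assert (v mod h < h)%nat by (apply Nat.mod_upper_bound; lia). lia. }
      exists (v / h :: w)%nat. split; [simpl; lia|]. split.
      * right. split; auto. apply Nat.Div0.div_lt_upper_bound. lia.
      * simpl. rewrite Hl, Hv'. replace (n + 0 + 1)%nat with (S n) by lia. fold h.
        rewrite (Nat.div_mod v h) at 3 by lia. lia.
    + destruct (IHn (S j) (v - Th L (S j) * Hn L (S n))%nat) as [w [Hl [Ha Hv']]]; [lia|].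
      exists (Th L (S j) :: w). split; [simpl; lia|]. split.
      * left. auto.
      * simpl. rewrite Hl, Hv'. replace (n + 0 + 1)%nat with (S n) by lia. lia.
Qed.

Lemma H_one L : (2 <= length L)%nat -> Hn L 1 = 1%nat.
Proof. intros HN. rewrite (H_Theta L 0 HN). reflexivity. Qed.

Lemma Th_one_pos L : admissible L -> (0 < Th L 1)%nat.
Proof.
  intros [HN Ha]. unfold Th, Theta. rewrite Nat.sub_diag, Nat.Div0.mod_0_l. exact Ha.
Qed.

Lemma H_incr L n : admissible L -> (1 <= n)%nat -> (Hn L n < Hn L (S n))%nat.
Proof.
  intros Hadm Hn1. assert (HN : (2 <= length L)%nat) by apply Hadm.
  rewrite H_Theta by auto. destruct n; [lia|].
  rewrite seg_S. cbn [Vs]. rewrite seg_length.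
  replace (n + 0 + 1)%nat with (S n) by lia.
  assert (T := Th_one_pos L Hadm). nia.
Qed.

Lemma H_ge L n : admissible L -> (n <= Hn L n)%nat.
Proof.
  intros Hadm. induction n. lia.
  destruct n. rewrite H_one by apply Hadm. lia.
  assert (X := H_incr L (S n) Hadm ltac:(lia)). lia.
Qed.

Lemma H_mono L a b : admissible L -> (1 <= a)%nat -> (a <= b)%nat -> (Hn L a <= Hn L b)%nat.
Proof.
  intros Hadm Ha Hab. induction Hab. lia.
  assert (X := H_incr L m Hadm ltac:(lia)). lia.
Qed.

Lemma find_len L m : admissible L -> (1 <= m)%nat ->
  exists n, (1 <= n)%nat /\ (Hn L n <= m < Hn L (S n))%nat.
Proof.
  intros Hadm Hm. assert (HN : (2 <= length L)%nat) by apply Hadm.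
  induction m. lia.
  destruct m.
  - exists 1%nat. rewrite H_one by auto. split; auto. assert (X := H_incr L 1 Hadm ltac:(lia)).
    rewrite H_one in X by auto. lia.
  - destruct IHm as [n [Hn1 [Ha Hb]]]; [lia|].
    destruct (Nat.eq_dec (S (S m)) (Hn L (S n))) as [E|E].
    + exists (S n). split; [lia|]. assert (X := H_incr L (S n) Hadm ltac:(lia)). lia.
    + exists n. split; auto. lia.
Qed.

Lemma expansion_exists L m : admissible L -> (1 <= m)%nat ->
  exists w, acc L 0 w /\ (0 < hd 0%nat w)%nat /\ Vs L w 0 = m /\ (Hn L (length w) <= m)%nat.
Proof.
  intros Hadm Hm. assert (HN : (2 <= length L)%nat) by apply Hadm.
  destruct (find_len L m Hadm Hm) as [n [Hn1 [Ha Hb]]].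
  destruct (exists_word L HN n 0 m) as [w [Hl [Hw Hv]]].
  { rewrite H_Theta in Hb by auto. lia. }
  exists w. split; auto. split; [|split; auto; rewrite Hl; auto].
  destruct w as [|d w]; simpl in Hl. lia.
  simpl. destruct d; [|lia].
  exfalso. destruct Hw as [[E _]|[_ Hw]].
  - assert (T := Th_one_pos L Hadm). simpl in E. lia.
  - assert (B := acc_lt_H L w HN Hw). simpl in Hv.
    replace (S (length w)) with n in B by lia. lia.
Qed.

Lemma Hvalue_Vs L w : Hvalue L w = Vs L w 0.
Proof.
  unfold Hvalue.
  assert (G : forall s, list_sum (map (fun k => nth (k - s) w 0 * Hn L (length w + s - k))%nat
                                  (seq s (length w))) = Vs L w 0).
  { induction w as [|d w IH]; intros s; [reflexivity|].
    change (seq s (length (d :: w))) with (s :: seq (S s) (length w)).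
    cbn [map list_sum fold_right Vs]. rewrite Nat.sub_diag. simpl nth.
    rewrite <- (IH (S s)). f_equal.
    - f_equal. f_equal. change (length (d::w)) with (S (length w)); lia.
    - unfold list_sum. f_equal. apply map_ext_in. intros k Hk. apply in_seq in Hk.
      replace (k - s)%nat with (S (k - S s)) by lia. simpl nth.
      f_equal. f_equal. change (length (d::w)) with (S (length w)); lia. }
  rewrite <- (G 1%nat). f_equal. apply map_ext_in. intros k Hk. apply in_seq in Hk.
  f_equal. f_equal. lia.
Qed.


Lemma lexlt_irrefl x : ~ lexlt x x.
Proof. induction x; simpl; auto. intros [H|[_ H]]; [lia|auto]. Qed.

Lemma lex_total x y : length x = length y -> x <> y -> lexlt x y \/ lexlt y x.
Proof.
  revert y; induction x as [|a x IH]; intros [|b y] Hl Hne; simpl in *; try lia.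
  - congruence.
  - destruct (Nat.lt_trichotomy a b) as [H|[H|H]].
    + left; left; auto.
    + subst b. assert (x <> y) by congruence.
      destruct (IH y ltac:(lia) H) as [H1|H1]; [left|right]; right; auto.
    + right; left; auto.
Qed.

Lemma lexlt_app_r x y z : length x = length y -> lexlt (x ++ z) (y ++ z) -> lexlt x y.
Proof.
  revert y; induction x as [|a x IH]; intros [|b y] Hl H; simpl in *; try lia.
  - exfalso. apply (lexlt_irrefl z H).
  - destruct H as [H|[E H]]; [left; auto|right; split; auto].
Qed.

Lemma lexlt_decomp x y : length x = length y -> lexlt x y ->
  exists p d e t t', x = p ++ d :: t /\ y = p ++ e :: t' /\ (d < e)%nat /\ length t = length t'.
Proof.
  revert y; induction x as [|a x IH]; intros [|b y] Hl H; simpl in *; try lia; try tauto.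
  destruct H as [H|[E H]].
  - exists [], a, b, x, y. simpl. repeat split; auto; lia.
  - subst b. destruct (IH y ltac:(lia) H) as [p [d [e [t [t' [H1 [H2 [H3 H4]]]]]]]].
    exists (a :: p), d, e, t, t'. subst. simpl. auto.
Qed.

Definition blk (L : list nat) (s : nat) (w : list nat) := firstn s w ++ repeat 0%nat (length L - s).
Definition ext (s : nat) (w : list nat) (M : nat) := firstn s w ++ repeat 0%nat (M - s).

Lemma blk_length L s w : (s <= length w)%nat -> length (blk L s w) = (s + (length L - s))%nat.
Proof. intros H. unfold blk. rewrite length_app, length_firstn, repeat_length. lia. Qed.

Lemma ext_length s w M : (s <= length w)%nat -> (s <= M)%nat -> length (ext s w M) = M.
Proof. intros H H'. unfold ext. rewrite length_app, length_firstn, repeat_length. lia. Qed.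

Lemma acc_ext L s w M : acc L 0 w -> acc L 0 (ext s w M).
Proof.
  intros H. unfold ext. apply acc_pad. rewrite <- (firstn_skipn s w) in H.
  apply acc_prefix in H. auto.
Qed.

Lemma firstn_ext s w M : (s <= length w)%nat -> firstn s (ext s w M) = firstn s w.
Proof.
  intros H. unfold ext. rewrite firstn_app. rewrite length_firstn.
  replace (s - Nat.min s (length w))%nat with 0%nat by lia. simpl. rewrite app_nil_r.
  rewrite firstn_firstn, Nat.min_id. reflexivity.
Qed.

Lemma Vs_ext_blk L s w M : (s <= length w)%nat -> (s + (length L - s) <= M)%nat ->
  Vs L (ext s w M) 0 = Vs L (blk L s w) (M - length (blk L s w)).
Proof.
  intros H1 H2. rewrite blk_length by auto. unfold ext, blk.
  rewrite !Vs_app, !Vs_repeat0, !repeat_length. f_equal. f_equal. lia.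
Qed.

Lemma Vs_ext_le L s w : (s <= length w)%nat -> (Vs L (ext s w (length w)) 0 <= Vs L w 0)%nat.
Proof.
  intros H. unfold ext. rewrite Vs_pad.
  transitivity (Vs L (firstn s w ++ skipn s w) 0).
  - rewrite Vs_app, length_skipn, Nat.add_0_r. lia.
  - rewrite firstn_skipn. lia.
Qed.

Lemma cmp_prefix L s x y : (2 <= length L)%nat ->
  acc L 0 x -> acc L 0 y -> length x = length y -> (s <= length x)%nat ->
  lexlt (firstn s x) (firstn s y) -> (Vs L x 0 < Vs L y 0)%nat.
Proof.
  intros HN Hx Hy Hl Hs Hlex.
  apply lexlt_decomp in Hlex.
  2:{ rewrite !length_firstn. lia. }
  destruct Hlex as [p [d [e [t [t' [E1 [E2 [Hde Ht]]]]]]]].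
  rewrite <- (firstn_skipn s x) in Hx |- *. rewrite <- (firstn_skipn s y) in Hy |- *.
  rewrite E1, E2 in *. rewrite <- !app_assoc in *. simpl in *.
  apply Vs_cmp; auto.
  rewrite !length_app, Ht, !length_skipn. lia.
Qed.

Lemma Hs_word L s b : Hs L s b ->
  exists w, acc L 0 w /\ (0 < hd 0%nat w)%nat /\ (s <= length w)%nat /\ b = blk L s w.
Proof.
  intros [m [Hm [eps [[[Hc Hh] Hv] [Hs E]]]]].
  exists eps. repeat split; auto; try lia. apply Hcirc_iff; auto.
Qed.

Lemma blk_Hs L s w : admissible L -> acc L 0 w -> (0 < hd 0%nat w)%nat -> (1 <= s <= length w)%nat ->
  Hs L s (blk L s w).
Proof.
  intros Hadm Hw Hh Hs. exists (Vs L w 0). split.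
  - destruct w as [|d w]; simpl in *. lia.
    assert (X := H_pos L (length w + 0) ltac:(apply Hadm)).
    replace (S (length w + 0)) with (length w + 0 + 1)%nat in X by lia. nia.
  - exists w. split; [|split; auto].
    split. split; auto. apply Hcirc_iff; auto. symmetry. apply Hvalue_Vs.
Qed.

Lemma L_seg L : L = seg L 0 (length L).
Proof.
  apply nth_ext with (d := 0%nat) (d' := 0%nat). rewrite seg_length. auto.
  intros i Hi. unfold seg. rewrite (nth_indep (map (Th L) (seq 1 (length L))) 0%nat (Th L 0)) by (rewrite length_map, length_seq; auto).
  rewrite map_nth, seq_nth by auto. unfold Th, Theta.
  f_equal. rewrite Nat.mod_small; lia.
Qed.

Lemma excl_gen L q M : (2 <= length L)%nat -> (1 <= q)%nat -> (q * length L <= M)%nat ->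
  Vs L (seg L 0 (q * length L - 1) ++ [S (acoef L (length L))]) (M - q * length L) = Hn L (S M).
Proof.
  intros HN Hq HM. set (r := (q * length L)%nat) in *.
  assert (Hr : (length L <= r)%nat) by (unfold r; nia).
  rewrite (H_Theta L M HN).
  assert (E : seg L 0 M = seg L 0 (r - 1) ++ [Th L r] ++ seg L 0 (M - r)).
  { replace M with ((r - 1) + 1 + (M - r))%nat at 1 by lia.
    rewrite !seg_add. rewrite <- app_assoc. f_equal. f_equal.
    - unfold seg. simpl. f_equal. f_equal. lia.
    - replace (0 + (r - 1 + 1))%nat with (0 + q * length L)%nat by (unfold r; lia).
      apply seg_period. lia. }
  assert (ETh : Th L r = acoef L (length L)).
  { unfold r. replace (q * length L)%nat with (length L + (q - 1) * length L)%nat by nia.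
    rewrite Th_period_mult by lia. apply Th_small. lia. }
  rewrite E, ETh. rewrite !Vs_app. cbn [Vs length app].
  rewrite ?length_app, ?seg_length. cbn [length].
  assert (X := H_Theta L (M - r) HN).
  replace (0 + (M - r + 0) + 1)%nat with (S (M - r)) by lia.
  replace (0 + 0 + (M - r) + 1)%nat with (S (M - r)) by lia.
  replace (0 + (M - r) + 1)%nat with (S (M - r)) by lia.
  replace (S (M - r) + 0)%nat with (1 + (M - r))%nat by lia.
  nia.
Qed.

Lemma removelast_seg L r : (1 <= r)%nat -> removelast (seg L 0 r) = seg L 0 (r - 1).
Proof.
  intros Hr. replace r with ((r - 1) + 1)%nat at 1 by lia. rewrite seg_add.
  unfold seg at 2. simpl. apply removelast_last.
Qed.

Lemma excl_value L s M : admissible L -> (1 <= s)%nat -> (s + (length L - s) <= M)%nat ->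
  length (excl_block L s) = (s + (length L - s))%nat /\
  Vs L (excl_block L s) (M - (s + (length L - s))) = Hn L (S M).
Proof.
  intros Hadm Hs HM. assert (HN : (2 <= length L)%nat) by apply Hadm.
  unfold excl_block. destruct (Nat.leb_spec (length L) s) as [Hle|Hgt].
  - set (p := (s mod length L)%nat). set (q := (s / length L)%nat).
    assert (Hsq : s = (q * length L + p)%nat).
    { unfold p, q. rewrite (Nat.div_mod_eq s (length L)) at 1. lia. }
    assert (Hp : (p < length L)%nat) by (unfold p; apply Nat.mod_upper_bound; lia).
    assert (Hq : (1 <= q)%nat) by nia.
    replace (s - p)%nat with (q * length L)%nat by lia.
    change (Theta_prefix L (q * length L)) with (seg L 0 (q * length L)).
    rewrite removelast_seg by nia.
    split.
    + rewrite !length_app, seg_length, repeat_length. simpl. nia.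
    + rewrite app_assoc, Vs_app, Vs_repeat0, repeat_length.
      replace (p + (M - (s + (length L - s))))%nat with (M - q * length L)%nat by nia.
      rewrite excl_gen by nia. lia.
  - assert (RL : removelast L = seg L 0 (length L - 1)).
    { rewrite <- removelast_seg by lia. f_equal. apply L_seg. }
    rewrite RL.
    replace (s + (length L - s))%nat with (1 * length L)%nat by lia.
    replace (length L - 1)%nat with (1 * length L - 1)%nat by lia.
    split.
    + rewrite length_app, seg_length. simpl. lia.
    + apply excl_gen; lia.
Qed.

Theorem block_char L s b b' eps : admissible L -> (1 <= s)%nat -> Hs L s b -> succ_block L s b b' ->
  acc L 0 eps -> (0 < hd 0%nat eps)%nat -> (s + (length L - s) <= length eps)%nat ->
  (blk L s eps = b <->
   (Vs L b (length eps - length b) <= Vs L eps 0 < Vs L b' (length eps - length b'))%nat).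
Proof.
  intros Hadm Hs1 Hb Hsucc Heps Hh HM. assert (HN : (2 <= length L)%nat) by apply Hadm.
  set (M := length eps) in *.
  destruct (Hs_word L s b Hb) as [wb [Hwb [Hhb [Hsb Eb]]]].
  assert (Hlb : length b = (s + (length L - s))%nat) by (rewrite Eb; apply blk_length; auto).
  assert (Lower : forall w, (s <= length w)%nat ->
            Vs L (blk L s w) (M - length (blk L s w)) = Vs L (ext s w M) 0).
  { intros w Hw. symmetry. apply Vs_ext_blk; auto. }
  split.
  - intros E. split.
    + rewrite <- E, Lower by lia. unfold M. apply Vs_ext_le. lia.
    + destruct Hsucc as [[Hb'1 [Hlt _]]|[_ Ex]].
      * destruct (Hs_word L s b' Hb'1) as [w' [Hw' [Hh' [Hs' E']]]].
        rewrite E', Lower by auto.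
        apply cmp_prefix with (s := s); auto.
        -- apply acc_ext; auto.
        -- rewrite ext_length; auto; lia.
        -- lia.
        -- rewrite firstn_ext by auto. rewrite <- E, E' in Hlt. unfold blk in Hlt.
           apply lexlt_app_r in Hlt; auto. rewrite !length_firstn. lia.
      * subst b'. destruct (excl_value L s M Hadm Hs1 HM) as [Hl Hv].
        rewrite Hl, Hv. apply acc_lt_H; auto.
  - intros [H1 H2].
    assert (Hc : Hs L s (blk L s eps)) by (apply blk_Hs; auto; lia).
    destruct (list_eq_dec Nat.eq_dec (blk L s eps) b) as [E|Ne]; auto. exfalso.
    assert (Hlen : length (blk L s eps) = length b) by (rewrite blk_length; lia).
    destruct (lex_total _ _ Hlen Ne) as [Hlt|Hlt].
    +
      rewrite Eb, Lower in H1 by auto.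
      assert (Vs L eps 0 < Vs L (ext s wb M) 0)%nat; [|lia].
      apply cmp_prefix with (s := s); auto.
      * apply acc_ext; auto.
      * rewrite ext_length; auto; lia.
      * lia.
      * rewrite firstn_ext by auto. rewrite Eb in Hlt. unfold blk in Hlt.
        apply lexlt_app_r in Hlt; auto. rewrite !length_firstn. lia.
    + destruct Hsucc as [[Hb'1 [Hlt' Hmin]]|[Hmax Ex]].
      * destruct (Hs_word L s b' Hb'1) as [w' [Hw' [Hh' [Hs' E']]]].
        rewrite E', Lower in H2 by auto.
        destruct (Hmin _ Hc Hlt) as [Hlt2|Eq].
        -- assert (Vs L (ext s w' M) 0 < Vs L eps 0)%nat; [|lia].
           apply cmp_prefix with (s := s); auto.
           ++ apply acc_ext; auto.
           ++ rewrite ext_length; auto; lia.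
           ++ rewrite ext_length; auto; lia.
           ++ rewrite firstn_ext by auto. rewrite E' in Hlt2. unfold blk in Hlt2.
              apply lexlt_app_r in Hlt2; auto. rewrite !length_firstn. lia.
        -- assert (E2 : blk L s w' = blk L s eps) by congruence.
           rewrite <- (Lower w' Hs'), E2, (Lower eps ltac:(lia)) in H2.
           assert (X := Vs_ext_le L s eps ltac:(lia)). fold M in X. lia.
      * exact (Hmax _ Hc Hlt).
Qed.


Lemma sumR_map_ext (f g : nat -> R) l : (forall x, In x l -> f x = g x) ->
  sumR (map f l) = sumR (map g l).
Proof. intros H. f_equal. apply map_ext_in. auto. Qed.

Lemma sumR_app l1 l2 : sumR (l1 ++ l2) = sumR l1 + sumR l2.
Proof. induction l1; simpl; [lra|]. rewrite IHl1. lra. Qed.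

Lemma sumR_scale c (f : nat -> R) l : sumR (map (fun x => c * f x) l) = c * sumR (map f l).
Proof. induction l; simpl; [lra|]. rewrite IHl. lra. Qed.

Lemma sumR_plus (f g : nat -> R) l : sumR (map (fun x => f x + g x) l) = sumR (map f l) + sumR (map g l).
Proof. induction l; simpl; [lra|]. rewrite IHl. lra. Qed.

Lemma sumR_nonneg (f : nat -> R) l : (forall x, In x l -> 0 <= f x) -> 0 <= sumR (map f l).
Proof.
  induction l; simpl; intros H; [lra|].
  assert (0 <= f a) by auto. assert (0 <= sumR (map f l)) by auto. lra.
Qed.

Lemma sumR_INR (f : nat -> nat) l : INR (list_sum (map f l)) = sumR (map (fun x => INR (f x)) l).
Proof. induction l; simpl; auto. rewrite plus_INR, IHl. reflexivity. Qed.

Lemma seq_last s n : seq s (S n) = seq s n ++ [(s + n)%nat].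
Proof. apply seq_S. Qed.

Definition Wsum L (t : R) := sumR (map (fun k => INR (Th L k) * t ^ k) (seq 1 (length L))).

Lemma psi_identity L psi : admissible L -> is_psi L psi ->
  Wsum L (/ psi) + (/ psi) ^ length L = 1.
Proof.
  intros [HN Ha] [Hp E]. set (N := length L) in *. set (t := / psi).
  assert (Ht : 0 < t) by (apply Rinv_0_lt_compat; auto).
  assert (Hpt : psi * t = 1) by (unfold t; field; lra).
  assert (E2 : (psi ^ N - sumR (map (fun k => INR (acoef L k) * psi ^ (N - k)) (seq 1 (N - 1)))
                - (1 + INR (acoef L N))) * t ^ N = 0) by (rewrite E; ring).
  rewrite Rmult_minus_distr_r, Rmult_minus_distr_r in E2.
  rewrite <- Rpow_mult_distr, Hpt, pow1 in E2.
  rewrite Rmult_comm, <- sumR_scale in E2.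
  assert (E3 : sumR (map (fun x => t ^ N * (INR (acoef L x) * psi ^ (N - x))) (seq 1 (N - 1)))
             = sumR (map (fun k => INR (Th L k) * t ^ k) (seq 1 (N - 1)))).
  { apply sumR_map_ext. intros k Hk. apply in_seq in Hk. rewrite Th_small by (unfold N in *; lia).
    replace N with ((N - k) + k)%nat at 1 by lia. rewrite pow_add.
    transitivity (INR (acoef L k) * (t * psi) ^ (N - k) * t ^ k); [|rewrite Rmult_comm with (r1 := t), Hpt, pow1; ring].
    rewrite Rpow_mult_distr. ring. }
  rewrite E3 in E2.
  unfold Wsum. fold N. replace N with (S (N - 1)) at 1 by lia. rewrite seq_last, map_app, sumR_app.
  simpl. replace (S (N - 1)) with N by lia. rewrite Th_small by (unfold N in *; lia).
  fold N. assert (TT : t * t ^ (N-1) = t ^ N) by (rewrite tech_pow_Rmult; f_equal; lia).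
  rewrite TT. lra.
Qed.

Lemma psi_gt1 L psi : admissible L -> is_psi L psi -> 1 < psi.
Proof.
  intros Hadm Hpsi. assert (I := psi_identity L psi Hadm Hpsi).
  destruct Hpsi as [Hp _]. destruct Hadm as [HN Ha].
  destruct (Rlt_or_le 1 psi) as [H|H]; auto. exfalso.
  assert (Ht : 1 <= / psi).
  { rewrite <- Rinv_1. apply Rinv_le_contravar; lra. }
  unfold Wsum in I. replace (length L) with (S (length L - 1)) in I at 1 by lia.
  simpl in I. unfold Th, Theta in I. rewrite Nat.sub_diag, Nat.Div0.mod_0_l in I.
  assert (0 <= sumR (map (fun k => INR (nth ((k - 1) mod length L) L 0%nat) * (/ psi) ^ k) (seq 2 (length L - 1)))).
  { apply sumR_nonneg. intros. apply Rmult_le_pos. apply pos_INR. apply pow_le. lra. }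
  assert (1 <= INR (nth 0 L 0%nat)) by (apply (le_INR 1); lia).
  assert (0 < (/ psi) ^ length L) by (apply pow_lt; lra).
  assert (INR (nth 0 L 0%nat) * (/ psi * 1) >= 1) by (rewrite Rmult_1_r; nra).
  lra.
Qed.


Fixpoint wmin (G : nat -> R) (n k : nat) : R :=
  match k with O => G n | S k' => Rmin (wmin G n k') (G (n - S k')%nat) end.
Fixpoint wmax (G : nat -> R) (n k : nat) : R :=
  match k with O => G n | S k' => Rmax (wmax G n k') (G (n - S k')%nat) end.

Lemma wmin_le G n k i : (i <= k)%nat -> wmin G n k <= G (n - i)%nat.
Proof.
  induction k; intros Hi; simpl.
  - replace i with 0%nat by lia. rewrite Nat.sub_0_r. lra.
  - destruct (Nat.eq_dec i (S k)) as [->|Hne].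
    + apply Rmin_r.
    + eapply Rle_trans. apply Rmin_l. apply IHk. lia.
Qed.

Lemma wmin_glb G n k x : (forall i, (i <= k)%nat -> x <= G (n - i)%nat) -> x <= wmin G n k.
Proof.
  induction k; intros H; simpl.
  - specialize (H 0%nat ltac:(lia)). rewrite Nat.sub_0_r in H. auto.
  - apply Rmin_glb. apply IHk. intros; apply H; lia. apply H; lia.
Qed.

Lemma wmax_ge G n k i : (i <= k)%nat -> G (n - i)%nat <= wmax G n k.
Proof.
  induction k; intros Hi; simpl.
  - replace i with 0%nat by lia. rewrite Nat.sub_0_r. lra.
  - destruct (Nat.eq_dec i (S k)) as [->|Hne].
    + apply Rmax_r.
    + eapply Rle_trans. apply IHk. lia. apply Rmax_l.
Qed.

Lemma wmax_lub G n k x : (forall i, (i <= k)%nat -> G (n - i)%nat <= x) -> wmax G n k <= x.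
Proof.
  induction k; intros H; simpl.
  - specialize (H 0%nat ltac:(lia)). rewrite Nat.sub_0_r in H. auto.
  - apply Rmax_lub. apply IHk. intros; apply H; lia. apply H; lia.
Qed.

Definition R2hyp (G : nat -> R) (N n0 : nat) (w : R) :=
  forall n, (n0 <= n)%nat -> forall lo hi,
    (forall i, (1 <= i <= N)%nat -> lo <= G (n - i)%nat <= hi) ->
    w * (G (n - 1)%nat - lo) <= G n - lo /\ w * (hi - G (n - 1)%nat) <= hi - G n.

Lemma Un_cv_shift (u : nat -> R) a l : Un_cv (fun k => u (a + k)%nat) l -> Un_cv u l.
Proof.
  intros H eps He. destruct (H eps He) as [M HM]. exists (a + M)%nat.
  intros n Hn. replace n with (a + (n - a))%nat by lia. apply HM. lia.
Qed.

Lemma Un_cv_shift' (u : nat -> R) a l : Un_cv u l -> Un_cv (fun k => u (k + a)%nat) l.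
Proof.
  intros H eps He. destruct (H eps He) as [M HM]. exists M.
  intros n Hn. apply HM. lia.
Qed.

Theorem window_conv (G : nat -> R) (N n0 : nat) (w : R) :
  (1 <= N)%nat -> (N <= n0)%nat -> 0 < w <= 1 -> R2hyp G N n0 w ->
  exists c, Un_cv G c /\ wmin G (n0 - 1) (N - 1) <= c.
Proof.
  intros HN Hn0 Hw HR.
  set (K := (N - 1)%nat). set (n1 := (n0 - 1)%nat).
  set (lo := fun n => wmin G n K). set (hi := fun n => wmax G n K).
  assert (Hstep : forall n, (n1 <= n)%nat -> lo n <= G (S n) <= hi n).
  { intros n Hn. destruct (HR (S n) ltac:(unfold n1 in *; lia) (lo n) (hi n)) as [A B].
    - intros i Hi. replace (S n - i)%nat with (n - (i - 1))%nat by lia. split.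
      apply wmin_le; unfold K; lia. apply wmax_ge; unfold K; lia.
    - replace (S n - 1)%nat with n in * by lia.
      assert (lo n <= G n) by (rewrite <- (Nat.sub_0_r n) at 2; apply wmin_le; lia).
      assert (G n <= hi n) by (rewrite <- (Nat.sub_0_r n) at 1; apply wmax_ge; lia).
      split; nra. }
  assert (Hlo1 : forall n, (n1 <= n)%nat -> lo n <= lo (S n)).
  { intros n Hn. apply wmin_glb. intros i Hi. destruct i.
    - rewrite Nat.sub_0_r. apply Hstep; auto.
    - replace (S n - S i)%nat with (n - i)%nat by lia. apply wmin_le. unfold K in *; lia. }
  assert (Hhi1 : forall n, (n1 <= n)%nat -> hi (S n) <= hi n).
  { intros n Hn. apply wmax_lub. intros i Hi. destruct i.
    - rewrite Nat.sub_0_r. apply Hstep; auto.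
    - replace (S n - S i)%nat with (n - i)%nat by lia. apply wmax_ge. unfold K in *; lia. }
  assert (Hlom : forall n j, (n1 <= n)%nat -> lo n <= lo (n + j)%nat).
  { intros n j Hn. induction j. rewrite Nat.add_0_r; lra.
    replace (n + S j)%nat with (S (n + j)) by lia. eapply Rle_trans; [apply IHj|]. apply Hlo1; lia. }
  assert (Hhim : forall n j, (n1 <= n)%nat -> hi (n + j)%nat <= hi n).
  { intros n j Hn. induction j. rewrite Nat.add_0_r; lra.
    replace (n + S j)%nat with (S (n + j)) by lia. eapply Rle_trans; [|apply IHj]. apply Hhi1; lia. }
  assert (HinG : forall n, lo n <= G n <= hi n).
  { intros n. split. rewrite <- (Nat.sub_0_r n) at 2; apply wmin_le; lia.
    rewrite <- (Nat.sub_0_r n) at 1; apply wmax_ge; lia. }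
  assert (Hinv : forall n m, (n1 <= n)%nat -> (n - K <= m)%nat -> lo n <= G m <= hi n).
  { intros n m Hn Hm. destruct (Nat.le_gt_cases n m) as [H|H].
    - replace m with (n + (m - n))%nat by lia.
      split. eapply Rle_trans; [apply (Hlom n (m - n)%nat Hn)|apply HinG].
      eapply Rle_trans; [apply HinG|apply (Hhim n (m - n)%nat Hn)].
    - replace m with (n - (n - m))%nat by lia. split.
      apply wmin_le; lia. apply wmax_ge; lia. }
  set (rho := 1 - w ^ N / 2).
  assert (HwN : 0 < w ^ N <= 1).
  { split. apply pow_lt; lra. rewrite <- (pow1 N). apply pow_incr; lra. }
  assert (Hwj : forall j, (j <= N)%nat -> w ^ N <= w ^ j).
  { intros j Hj. replace N with (j + (N - j))%nat by lia. rewrite pow_add.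
    assert (0 < w ^ j) by (apply pow_lt; lra). assert (w ^ (N - j) <= 1).
    { rewrite <- (pow1 (N - j)). apply pow_incr; lra. } nra. }
  assert (Hcontr : forall n, (n1 <= n)%nat -> hi (n + N)%nat - lo (n + N)%nat <= rho * (hi n - lo n)).
  { intros n Hn.
    assert (Hloh : lo n <= hi n) by (destruct (HinG n); lra).
    assert (HR' : forall j, (1 <= j <= N)%nat ->
               w * (G (n + j - 1)%nat - lo n) <= G (n + j)%nat - lo n /\
               w * (hi n - G (n + j - 1)%nat) <= hi n - G (n + j)%nat).
    { intros j Hj. apply HR. unfold n1 in *; lia. intros i Hi. apply Hinv; auto. unfold K; lia. }
    destruct (Rle_or_lt ((hi n - lo n) / 2) (G n - lo n)) as [Hc|Hc].
    - assert (Hg : forall j, (j <= N)%nat -> w ^ j * (G n - lo n) <= G (n + j)%nat - lo n).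
      { induction j; intros Hj. simpl. rewrite Nat.add_0_r. lra.
        destruct (HR' (S j) ltac:(lia)) as [A _].
        replace (n + S j - 1)%nat with (n + j)%nat in A by lia.
        specialize (IHj ltac:(lia)). simpl. nra. }
      assert (lo n + w ^ N * ((hi n - lo n) / 2) <= lo (n + N)%nat).
      { apply wmin_glb. intros i Hi. replace (n + N - i)%nat with (n + (N - i))%nat by lia.
        specialize (Hg (N - i)%nat ltac:(lia)). specialize (Hwj (N - i)%nat ltac:(lia)).
        assert (0 <= (hi n - lo n) / 2) by lra. nra. }
      assert (hi (n + N)%nat <= hi n) by auto. unfold rho. nra.
    - assert (Hg : forall j, (j <= N)%nat -> w ^ j * (hi n - G n) <= hi n - G (n + j)%nat).
      { induction j; intros Hj. simpl. rewrite Nat.add_0_r. lra.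
        destruct (HR' (S j) ltac:(lia)) as [_ B].
        replace (n + S j - 1)%nat with (n + j)%nat in B by lia.
        specialize (IHj ltac:(lia)). simpl. nra. }
      assert (hi (n + N)%nat <= hi n - w ^ N * ((hi n - lo n) / 2)).
      { apply wmax_lub. intros i Hi. replace (n + N - i)%nat with (n + (N - i))%nat by lia.
        specialize (Hg (N - i)%nat ltac:(lia)). specialize (Hwj (N - i)%nat ltac:(lia)).
        assert (0 <= (hi n - lo n) / 2) by lra. nra. }
      assert (lo n <= lo (n + N)%nat) by auto. unfold rho. nra. }
  assert (Hrho : 0 <= rho < 1) by (unfold rho; lra).
  assert (Hgeo : forall k, hi (n1 + k * N)%nat - lo (n1 + k * N)%nat <= rho ^ k * (hi n1 - lo n1)).
  { induction k. simpl. rewrite Nat.add_0_r. lra.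
    replace (n1 + S k * N)%nat with ((n1 + k * N) + N)%nat by lia.
    eapply Rle_trans. apply Hcontr. lia. simpl. nra. }
  assert (HD : forall n, (n1 <= n)%nat -> 0 <= hi n - lo n) by (intros n _; destruct (HinG n); lra).
  set (u := fun k => lo (n1 + k)%nat).
  assert (Hug : Un_growing u).
  { intros k. unfold u. replace (n1 + S k)%nat with (S (n1 + k)) by lia. apply Hlo1. lia. }
  assert (Hub : has_ub u).
  { exists (hi n1). intros x [k ->]. unfold u. destruct (HinG (n1 + k)%nat).
    assert (hi (n1 + k)%nat <= hi n1) by auto. lra. }
  destruct (growing_cv u Hug Hub) as [c Hc].
  exists c. split.
  - apply Un_cv_shift with (a := n1). intros eps He.
    destruct (Hc (eps / 2) ltac:(lra)) as [M1 HM1].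
    assert (Habs : Rabs rho < 1) by (rewrite Rabs_right; lra).
    destruct (Req_dec (hi n1 - lo n1) 0) as [Z|NZ].
    + exists M1. intros k Hk. specialize (HM1 k Hk). unfold u, R_dist in *.
      assert (HDk := Hgeo 0%nat). 
      assert (hi (n1 + k)%nat - lo (n1 + k)%nat <= 0).
      { assert (hi (n1 + k)%nat <= hi n1) by auto. assert (lo n1 <= lo (n1 + k)%nat) by auto. lra. }
      destruct (HinG (n1 + k)%nat). apply Rabs_def1; apply Rabs_def2 in HM1; lra.
    + assert (Dpos : 0 < hi n1 - lo n1) by (specialize (HD n1 ltac:(lia)); lra).
      destruct (pow_lt_1_zero rho Habs (eps / 2 / (hi n1 - lo n1))) as [k0 Hk0].
      { apply Rdiv_lt_0_compat; lra. }
      exists (Nat.max M1 (k0 * N)). intros k Hk. specialize (HM1 k ltac:(lia)).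
      specialize (Hk0 k0 ltac:(lia)). rewrite Rabs_right in Hk0 by (apply Rle_ge, pow_le; lra).
      assert (E1 : hi (n1 + k)%nat - lo (n1 + k)%nat <= rho ^ k0 * (hi n1 - lo n1)).
      { replace (n1 + k)%nat with ((n1 + k0 * N) + (k - k0 * N))%nat by lia.
        eapply Rle_trans; [|apply Hgeo].
        assert (hi (n1 + k0 * N + (k - k0 * N))%nat <= hi (n1 + k0 * N)%nat) by (apply Hhim; lia).
        assert (lo (n1 + k0 * N)%nat <= lo (n1 + k0 * N + (k - k0 * N))%nat) by (apply Hlom; lia).
        lra. }
      assert (E2 : rho ^ k0 * (hi n1 - lo n1) < eps / 2).
      { apply (Rmult_lt_compat_r (hi n1 - lo n1)) in Hk0; auto.
        unfold Rdiv in Hk0. rewrite Rmult_assoc, Rinv_l, Rmult_1_r in Hk0; lra. }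
      unfold u, R_dist in *. destruct (HinG (n1 + k)%nat).
      apply Rabs_def1; apply Rabs_def2 in HM1; lra.
  - assert (u 0%nat <= c).
    { apply Rle_cv_lim with (Un := fun _ => u 0%nat) (Vn := u).
      - intros k. induction k. lra. eapply Rle_trans; [apply IHk|apply Hug].
      - intros e He. exists 0%nat. intros. unfold R_dist. rewrite Rminus_diag, Rabs_R0. lra.
      - auto. }
    unfold u, lo in H. rewrite Nat.add_0_r in H. auto.
Qed.


Lemma sumR_minus (f g : nat -> R) l : sumR (map (fun x => f x - g x) l) = sumR (map f l) - sumR (map g l).
Proof. induction l; simpl; [lra|]. rewrite IHl. lra. Qed.

Lemma H_rec L m : (2 <= length L)%nat -> (length L <= m)%nat ->
  Hn L (S m) = (Vs L (seg L 0 (length L)) (m - length L) + Hn L (S (m - length L)))%nat.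
Proof.
  intros HN Hm. rewrite (H_Theta L m HN), (H_Theta L (m - length L) HN).
  replace (seg L 0 m) with (seg L 0 (length L) ++ seg L 0 (m - length L)).
  - rewrite Vs_app, seg_length, Nat.add_0_r. lia.
  - replace m with (length L + (m - length L))%nat at 2 by lia.
    rewrite seg_add. f_equal. rewrite <- (seg_period L 0 _ 1) by lia. f_equal; lia.
Qed.

Definition Gs L (t : R) (n : nat) : R := INR (Hn L n) * t ^ n.

Lemma G_rec L t m : (2 <= length L)%nat -> (length L <= m)%nat ->
  Gs L t (S m) = sumR (map (fun k => INR (Th L k) * t ^ k * Gs L t (S m - k)%nat) (seq 1 (length L)))
                 + t ^ length L * Gs L t (S m - length L)%nat.
Proof.
  intros HN Hm. unfold Gs. rewrite (H_rec L m HN Hm), plus_INR.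
  unfold seg. rewrite Vs_map_seq, sumR_INR, Rmult_plus_distr_r.
  f_equal.
  - rewrite Rmult_comm, <- sumR_scale. apply sumR_map_ext. intros k Hk. apply in_seq in Hk.
    rewrite mult_INR. replace (length L + 1 + (m - length L) - k)%nat with (S m - k)%nat by lia.
    replace (S m) with ((S m - k) + k)%nat at 1 by lia. rewrite pow_add. ring.
  - replace (S (m - length L)) with (S m - length L)%nat by lia.
    replace (S m) with ((S m - length L) + length L)%nat at 2 by lia. rewrite pow_add. ring.
Qed.

Lemma wmin_pos G n k : (forall i, (i <= k)%nat -> 0 < G (n - i)%nat) -> 0 < wmin G n k.
Proof.
  induction k; intros H; simpl.
  - specialize (H 0%nat ltac:(lia)). rewrite Nat.sub_0_r in H. auto.
  - apply Rmin_glb_lt. apply IHk. intros; apply H; lia. apply H; lia.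
Qed.

Theorem H_asym L psi : admissible L -> is_psi L psi ->
  exists c, 0 < c /\ Un_cv (Gs L (/ psi)) c.
Proof.
  intros Hadm Hpsi. assert (HN : (2 <= length L)%nat) by apply Hadm.
  assert (Hp1 := psi_gt1 L psi Hadm Hpsi).
  assert (Id := psi_identity L psi Hadm Hpsi).
  set (t := / psi) in *. set (N := length L) in *.
  assert (Ht : 0 < t) by (unfold t; apply Rinv_0_lt_compat; lra).
  assert (HtN : 0 < t ^ N) by (apply pow_lt; lra).
  assert (HTh1 := Th_one_pos L Hadm).
  set (w := INR (Th L 1) * t).
  assert (HWsplit : Wsum L t = w + sumR (map (fun k => INR (Th L k) * t ^ k) (seq 2 (N - 1)))).
  { unfold Wsum. fold N. replace N with (S (N - 1)) at 1 by lia. simpl. unfold w. ring. }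
  assert (Hrest : 0 <= sumR (map (fun k => INR (Th L k) * t ^ k) (seq 2 (N - 1)))).
  { apply sumR_nonneg. intros. apply Rmult_le_pos. apply pos_INR. apply pow_le. lra. }
  assert (Hw : 0 < w <= 1).
  { split. unfold w. apply Rmult_lt_0_compat; auto. apply (lt_INR 0); auto. lra. }
  assert (Gpos : forall n, (1 <= n)%nat -> 0 < Gs L t n).
  { intros n Hn. unfold Gs. apply Rmult_lt_0_compat; [|apply pow_lt; lra].
    destruct n; [lia|]. apply (lt_INR 0). assert (X := H_pos L n HN). lia. }
  destruct (window_conv (Gs L t) N (N + 2) w ltac:(lia) ltac:(lia) Hw) as [c [Hc Hcmin]].
  - intros n Hn lo hi Hwin.
    destruct n as [|m]; [lia|].
    rewrite (G_rec L t m HN ltac:(unfold N in *; lia)). fold N.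
    assert (Hsplit : forall x, (forall k, (1 <= k <= N)%nat -> 0 <= x k) ->
       w * x 1%nat <= sumR (map (fun k => INR (Th L k) * t ^ k * x k) (seq 1 N))).
    { intros x Hx. replace N with (S (N - 1)) at 1 by lia. simpl.
      assert (0 <= sumR (map (fun k => INR (Th L k) * t ^ k * x k) (seq 2 (N - 1)))).
      { apply sumR_nonneg. intros k Hk. apply in_seq in Hk.
        apply Rmult_le_pos. apply Rmult_le_pos. apply pos_INR. apply pow_le. lra. apply Hx. lia. }
      unfold w. lra. }
    assert (EW : forall y, sumR (map (fun k => INR (Th L k) * t ^ k * Gs L t (S m - k)%nat) (seq 1 N)) - y * Wsum L t
                 = sumR (map (fun k => INR (Th L k) * t ^ k * (Gs L t (S m - k)%nat - y)) (seq 1 N))).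
    { intros y. unfold Wsum. fold N. rewrite <- sumR_scale, <- sumR_minus.
      apply sumR_map_ext. intros. ring. }
    replace (S m - 1)%nat with m by lia.
    assert (HWN : Wsum L t = 1 - t ^ N) by lra.
    split.
    + assert (A := Hsplit (fun k => Gs L t (S m - k)%nat - lo)). cbv beta in A.
      replace (S m - 1)%nat with m in A by lia.
      assert (A' : w * (Gs L t m - lo) <= sumR (map (fun k => INR (Th L k) * t ^ k * (Gs L t (S m - k)%nat - lo)) (seq 1 N))).
      { apply A. intros k Hk. specialize (Hwin k Hk). lra. }
      rewrite <- EW in A'. specialize (Hwin N ltac:(lia)). rewrite HWN in A'. nra.
    + assert (A := Hsplit (fun k => hi - Gs L t (S m - k)%nat)). cbv beta in A.
      replace (S m - 1)%nat with m in A by lia.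
      assert (A' : w * (hi - Gs L t m) <= sumR (map (fun k => INR (Th L k) * t ^ k * (hi - Gs L t (S m - k)%nat)) (seq 1 N))).
      { apply A. intros k Hk. specialize (Hwin k Hk). lra. }
      assert (EW2 : hi * Wsum L t - sumR (map (fun k => INR (Th L k) * t ^ k * Gs L t (S m - k)%nat) (seq 1 N))
                 = sumR (map (fun k => INR (Th L k) * t ^ k * (hi - Gs L t (S m - k)%nat)) (seq 1 N))).
      { unfold Wsum. fold N. rewrite <- sumR_scale, <- sumR_minus.
        apply sumR_map_ext. intros. ring. }
      rewrite <- EW2 in A'. specialize (Hwin N ltac:(lia)). rewrite HWN in A'. nra.
  - exists c. split; auto. eapply Rlt_le_trans; [|apply Hcmin].
    apply wmin_pos. intros i Hi. apply Gpos. lia.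
Qed.

Lemma dotH_nil t : dotH t [] = 0.
Proof. reflexivity. Qed.

Lemma dotH_cons t d w : dotH t (d :: w) = INR d + t * dotH t w.
Proof.
  unfold dotH. simpl length. change (seq 1 (S (length w))) with (1%nat :: seq 2 (length w)).
  cbn [map sumR fold_right]. simpl nth. rewrite pow_O, Rmult_1_r. f_equal.
  rewrite <- sumR_scale. rewrite <- seq_shift, map_map. apply sumR_map_ext.
  intros k Hk. apply in_seq in Hk. replace (S k - 1)%nat with (S (k - 1)) by lia.
  simpl nth. simpl pow. ring.
Qed.

Theorem Vs_asym L t c : Un_cv (Gs L t) c -> forall b,
  Un_cv (fun r => INR (Vs L b r) * t ^ (length b + r)) (c * dotH t b).
Proof.
  intros Hc b. induction b as [|d b IH].
  - simpl. rewrite dotH_nil, Rmult_0_r. intros e He. exists 0%nat. intros.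
    unfold R_dist. rewrite Rmult_0_l, Rminus_diag, Rabs_R0. lra.
  - rewrite dotH_cons.
    replace (c * (INR d + t * dotH t b)) with (INR d * c + t * (c * dotH t b)) by ring.
    assert (E : forall r, INR (Vs L (d :: b) r) * t ^ (length (d :: b) + r)
              = INR d * Gs L t (r + (length b + 1))%nat + t * (INR (Vs L b r) * t ^ (length b + r))).
    { intros r. cbn [Vs length]. rewrite plus_INR, mult_INR. unfold Gs.
      replace (length b + r + 1)%nat with (r + (length b + 1))%nat by lia.
      replace (S (length b) + r)%nat with (r + (length b + 1))%nat by lia.
      replace (r + (length b + 1))%nat with (S (length b + r)) by lia. simpl. ring. }
    intros e He.
    assert (A : Un_cv (fun r => INR d * Gs L t (r + (length b + 1))%nat + t * (INR (Vs L b r) * t ^ (length b + r)))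
                      (INR d * c + t * (c * dotH t b))).
    { apply CV_plus.
      - apply CV_mult. intros e' He'. exists 0%nat. intros. unfold R_dist. rewrite Rminus_diag, Rabs_R0. lra.
        apply Un_cv_shift'. auto.
      - apply CV_mult. intros e' He'. exists 0%nat. intros. unfold R_dist. rewrite Rminus_diag, Rabs_R0. lra.
        auto. }
    destruct (A e He) as [M HM]. exists M. intros n Hn. rewrite E. apply HM. auto.
Qed.


Lemma Rabs_le_between x e : Rabs x <= e -> - e <= x <= e.
Proof. unfold Rabs. destruct (Rcase_abs x); intros; lra. Qed.

Lemma Int_part_spec x : IZR (Int_part x) <= x < IZR (Int_part x) + 1.
Proof. destruct (base_Int_part x). lra. Qed.

Lemma Int_part_unique x z : IZR z <= x < IZR z + 1 -> Int_part x = z.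
Proof.
  intros H. destruct (Int_part_spec x) as [A B].
  assert (C1 : (Int_part x < z + 1)%Z) by (apply lt_IZR; rewrite plus_IZR; simpl; lra).
  assert (C2 : (z < Int_part x + 1)%Z) by (apply lt_IZR; rewrite plus_IZR; simpl; lra).
  lia.
Qed.

Lemma frac_range x : 0 <= frac_part x < 1.
Proof. unfold frac_part. destruct (Int_part_spec x). lra. Qed.

Lemma frac_unique x z : IZR z <= x < IZR z + 1 -> frac_part x = x - IZR z.
Proof. intros H. unfold frac_part. rewrite (Int_part_unique x z H). reflexivity. Qed.

Lemma frac_shift x z : frac_part (x + IZR z) = frac_part x.
Proof.
  rewrite (frac_unique (x + IZR z) (Int_part x + z)).
  - unfold frac_part. rewrite plus_IZR. ring.
  - rewrite plus_IZR. destruct (Int_part_spec x). lra.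
Qed.

Definition ind (P : Prop) : R := INR (indicator P).

Lemma ind_true (P : Prop) : P -> ind P = 1.
Proof. intros H. unfold ind, indicator. destruct (excluded_middle_informative P); [reflexivity|tauto]. Qed.

Lemma ind_false (P : Prop) : ~ P -> ind P = 0.
Proof. intros H. unfold ind, indicator. destruct (excluded_middle_informative P); [tauto|reflexivity]. Qed.

Lemma ind_range P : 0 <= ind P <= 1.
Proof. unfold ind, indicator. destruct (excluded_middle_informative P); simpl; lra. Qed.

Lemma ind_ext (P Q : Prop) : (P <-> Q) -> ind P = ind Q.
Proof.
  intros H. destruct (classic P) as [p|np].
  - rewrite !ind_true; tauto.
  - rewrite !ind_false; tauto.
Qed.

Lemma ind_le (P Q : Prop) : (P -> Q) -> ind P <= ind Q.
Proof.
  intros H. destruct (classic P) as [p|np].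
  - rewrite !ind_true; auto. lra.
  - rewrite (ind_false P np). apply ind_range.
Qed.

Definition sumf (g : nat -> R) (m : nat) : R := sumR (map g (seq 0 m)).

Lemma sumf_S g m : sumf g (S m) = sumf g m + g m.
Proof. unfold sumf. rewrite seq_S, map_app, sumR_app. simpl. ring. Qed.

Lemma sumf_0 g : sumf g 0 = 0.
Proof. reflexivity. Qed.

Lemma sumf_ext g h m : (forall j, (j < m)%nat -> g j = h j) -> sumf g m = sumf h m.
Proof.
  intros H. induction m. reflexivity. rewrite !sumf_S. rewrite IHm by (intros; apply H; lia).
  rewrite H by lia. reflexivity.
Qed.

Lemma sumf_plus g h m : sumf (fun j => g j + h j) m = sumf g m + sumf h m.
Proof. induction m. unfold sumf; simpl; lra. rewrite !sumf_S, IHm. ring. Qed.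

Lemma sumf_scale c g m : sumf (fun j => c * g j) m = c * sumf g m.
Proof. induction m. unfold sumf; simpl; lra. rewrite !sumf_S, IHm. ring. Qed.

Lemma sumf_const c m : sumf (fun _ => c) m = INR m * c.
Proof. induction m. unfold sumf; simpl; lra. rewrite sumf_S, IHm, S_INR. ring. Qed.

Lemma sumf_le g h m : (forall j, (j < m)%nat -> g j <= h j) -> sumf g m <= sumf h m.
Proof.
  intros H. induction m. unfold sumf; simpl; lra. rewrite !sumf_S.
  assert (g m <= h m) by (apply H; lia). assert (sumf g m <= sumf h m) by (apply IHm; intros; apply H; lia). lra.
Qed.

Lemma sumf_add g a b : sumf g (a + b) = sumf g a + sumf (fun j => g (a + j)%nat) b.
Proof.
  induction b. rewrite Nat.add_0_r, sumf_0. ring.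
  replace (a + S b)%nat with (S (a + b)) by lia. rewrite !sumf_S, IHb. ring.
Qed.

Lemma sumf_rev g m : sumf (fun j => g (m - 1 - j)%nat) m = sumf g m.
Proof.
  revert g. induction m; intros g. reflexivity.
  rewrite sumf_S. replace (S m - 1 - m)%nat with 0%nat by lia.
  rewrite (sumf_ext _ (fun j => g (S (m - 1 - j))) m) by (intros; f_equal; lia).
  rewrite (IHm (fun i => g (S i))).
  replace (S m) with (1 + m)%nat by lia. rewrite sumf_add. unfold sumf at 2. simpl. ring.
Qed.

Lemma cntlt_bounds (d T : R) m : 0 < d ->
  let c := sumf (fun j => ind (INR j * d < T)) m in
  (0 < T -> c < T / d + 1) /\ Rmin (INR m) (T / d) <= c /\ c <= INR m.
Proof.
  intros Hd. cbv zeta. induction m.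
  - rewrite sumf_0. simpl INR. split; [intros; assert (0 < T / d) by (apply Rdiv_lt_0_compat; lra); lra|].
    split; [|lra]. apply Rmin_l.
  - rewrite sumf_S, S_INR. destruct IHm as [U [Lo Up]].
    destruct (Rlt_dec (INR m * d) T) as [Hlt|Hge].
    + rewrite ind_true by auto. rewrite ?S_INR. repeat split.
      * intros HT. assert (INR m < T / d).
        { apply (Rmult_lt_reg_r d); auto. unfold Rdiv. rewrite Rmult_assoc, Rinv_l; lra. }
        lra.
      * unfold Rmin in *. destruct (Rle_dec (INR m) (T / d)); destruct (Rle_dec (INR m + 1) (T / d)); lra.
      * lra.
    + rewrite ind_false by auto. rewrite ?S_INR. repeat split.
      * intros HT. specialize (U HT). lra.
      * assert (T / d <= INR m).
        { apply (Rmult_le_reg_r d); auto. unfold Rdiv. rewrite Rmult_assoc, Rinv_l; lra. }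
        unfold Rmin in *. destruct (Rle_dec (INR m) (T / d)); destruct (Rle_dec (INR m + 1) (T / d)); lra.
      * lra.
Qed.

Lemma frac_ptwise y l u : 0 <= l <= 1 -> 0 <= u < 1 ->
  ind (frac_part (y + u) < l) =
  l + frac_part (y - l) - frac_part y + ind (u < 1 - frac_part (y - l)) - ind (u < 1 - frac_part y).
Proof.
  intros Hl Hu. set (z := Int_part y). assert (Hz := Int_part_spec y). fold z in Hz.
  assert (Ef : frac_part y = y - IZR z) by reflexivity.
  destruct (Rlt_or_le (y - IZR z) l) as [Hfl|Hfl].
  - assert (Ef' : frac_part (y - l) = y - l - IZR (z - 1)).
    { apply frac_unique. rewrite minus_IZR. simpl. lra. }
    rewrite minus_IZR in Ef'. simpl in Ef'.
    destruct (Rlt_or_le (y - IZR z + u) 1) as [Hb|Hb].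
    + assert (E : frac_part (y + u) = y + u - IZR z) by (apply frac_unique; lra).
      rewrite E, Ef, Ef'. rewrite (ind_true (u < 1 - (y - IZR z))) by lra.
      rewrite (ind_ext (u < 1 - (y - l - (IZR z - 1))) (y + u - IZR z < l)) by (split; intros; lra).
      ring.
    + assert (E : frac_part (y + u) = y + u - IZR (z + 1)) by (apply frac_unique; rewrite plus_IZR; simpl; lra).
      rewrite plus_IZR in E. simpl in E.
      rewrite E, Ef, Ef'. rewrite (ind_false (u < 1 - (y - IZR z))) by lra.
      rewrite (ind_true (y + u - (IZR z + 1) < l)) by lra.
      rewrite (ind_false (u < 1 - (y - l - (IZR z - 1)))) by lra.
      ring.
  - assert (Ef' : frac_part (y - l) = y - l - IZR z) by (apply frac_unique; lra).
    destruct (Rlt_or_le (y - IZR z + u) 1) as [Hb|Hb].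
    + assert (E : frac_part (y + u) = y + u - IZR z) by (apply frac_unique; lra).
      rewrite E, Ef, Ef'. rewrite (ind_true (u < 1 - (y - IZR z))) by lra.
      rewrite (ind_true (u < 1 - (y - l - IZR z))) by lra.
      rewrite (ind_false (y + u - IZR z < l)) by lra. ring.
    + assert (E : frac_part (y + u) = y + u - IZR (z + 1)) by (apply frac_unique; rewrite plus_IZR; simpl; lra).
      rewrite plus_IZR in E. simpl in E.
      rewrite E, Ef, Ef'. rewrite (ind_false (u < 1 - (y - IZR z))) by lra.
      rewrite (ind_ext (y + u - (IZR z + 1) < l) (u < 1 - (y - l - IZR z))) by (split; intros; lra).
      ring.
Qed.

Lemma AP_pos (d y l : R) m : 0 < d -> INR m * d <= 1 < (INR m + 1) * d -> 0 <= l <= 1 ->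
  Rabs (sumf (fun j => ind (frac_part (y + INR j * d) < l)) m - INR m * l) <= 3.
Proof.
  intros Hd Hm Hl.
  set (f := frac_part y). set (f' := frac_part (y - l)).
  assert (Hf := frac_range y). assert (Hf' := frac_range (y - l)). fold f f' in Hf, Hf'.
  rewrite (sumf_ext _ (fun j => (l + f' - f) + (ind (INR j * d < 1 - f') - ind (INR j * d < 1 - f))) m).
  2:{ intros j Hj. rewrite frac_ptwise; auto. fold f f'. ring.
      split. apply Rmult_le_pos; [apply pos_INR|lra].
      assert (INR j + 1 <= INR m) by (rewrite <- S_INR; apply le_INR; lia). nra. }
  rewrite sumf_plus, sumf_const.
  assert (Eminus : forall g h : nat -> R, sumf (fun j => g j - h j) m = sumf g m - sumf h m).
  { intros g h. unfold Rminus. rewrite sumf_plus. rewrite (sumf_ext (fun j => - h j) (fun j => -1 * h j)) by (intros; ring).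
    rewrite sumf_scale. ring. }
  rewrite Eminus.
  destruct (cntlt_bounds d (1 - f') m Hd) as [U1 [L1 _]].
  destruct (cntlt_bounds d (1 - f) m Hd) as [U2 [L2 _]].
  specialize (U1 ltac:(lra)). specialize (U2 ltac:(lra)).
  set (C1 := sumf (fun j => ind (INR j * d < 1 - f')) m) in *.
  set (C2 := sumf (fun j => ind (INR j * d < 1 - f)) m) in *.
  set (D := / d).
  assert (HD : INR m <= D < INR m + 1).
  { unfold D. split.
    - apply (Rmult_le_reg_r d); auto. rewrite Rinv_l; lra.
    - apply (Rmult_lt_reg_r d); auto. rewrite Rinv_l; lra. }
  assert (E1 : (1 - f') / d = (1 - f') * D) by reflexivity.
  assert (E2 : (1 - f) / d = (1 - f) * D) by reflexivity.
  rewrite E1 in U1, L1. rewrite E2 in U2, L2.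
  assert (HDp : 0 < D) by (unfold D; apply Rinv_0_lt_compat; lra).
  assert ((1 - f') * D <= D) by nra. assert ((1 - f) * D <= D) by nra.
  assert (M1 : (1 - f') * D - 1 < C1).
  { unfold Rmin in L1. destruct (Rle_dec (INR m) ((1 - f') * D)); nra. }
  assert (M2 : (1 - f) * D - 1 < C2).
  { unfold Rmin in L2. destruct (Rle_dec (INR m) ((1 - f) * D)); nra. }
  assert (Key : INR m * (l + f' - f) + (C1 - C2) - INR m * l = (f' - f) * (INR m - D) + ((C1 - (1 - f') * D) - (C2 - (1 - f) * D))) by ring.
  rewrite Key. 
  assert (Habs : Rabs ((f' - f) * (INR m - D)) <= 1).
  { rewrite Rabs_mult. assert (Rabs (f' - f) <= 1) by (apply Rabs_le; lra).
    assert (Rabs (INR m - D) <= 1) by (apply Rabs_le; lra).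
    assert (0 <= Rabs (f' - f)) by apply Rabs_pos. assert (0 <= Rabs (INR m - D)) by apply Rabs_pos. nra. }
  eapply Rle_trans. apply Rabs_triang.
  assert (Rabs ((C1 - (1 - f') * D) - (C2 - (1 - f) * D)) <= 2) by (apply Rabs_le; lra).
  lra.
Qed.

Lemma AP_any (d y l : R) m : 0 < Rabs d -> INR m * Rabs d <= 1 < (INR m + 1) * Rabs d -> 0 <= l <= 1 ->
  Rabs (sumf (fun j => ind (frac_part (y + INR j * d) < l)) m - INR m * l) <= 3.
Proof.
  intros Hd Hm Hl. destruct (Rle_or_lt 0 d) as [Hp|Hn].
  - rewrite Rabs_right in * by lra. apply AP_pos; auto.
  - rewrite Rabs_left in * by lra.
    rewrite <- sumf_rev.
    rewrite (sumf_ext _ (fun j => ind (frac_part ((y + (INR m - 1) * d) + INR j * (- d)) < l)) m).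
    + apply AP_pos; auto; lra.
    + intros j Hj. f_equal. f_equal. f_equal. rewrite minus_INR by lia. rewrite minus_INR by lia.
      simpl. ring.
Qed.

Lemma pigeonhole Q (f : nat -> nat) : (forall i, (i <= Q)%nat -> (f i < Q)%nat) ->
  exists i j, (i < j <= Q)%nat /\ f i = f j.
Proof.
  revert f. induction Q as [|Q IH]; intros f Hf.
  - specialize (Hf 0%nat ltac:(lia)). lia.
  - destruct (classic (exists i, (i < S Q)%nat /\ f i = f (S Q))) as [[i [Hi E]]|Hno].
    + exists i, (S Q). split; auto.
    + set (g := fun i => if (f i <? f (S Q))%nat then f i else (f i - 1)%nat).
      destruct (IH g) as [i [j [Hij E]]].
      * intros i Hi. unfold g. assert (f (S Q) < S Q)%nat by (apply Hf; lia).
        assert (f i < S Q)%nat by (apply Hf; lia).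
        assert (f i <> f (S Q)) by (intros E; apply Hno; exists i; split; auto; lia).
        destruct (Nat.ltb_spec (f i) (f (S Q))); lia.
      * exists i, j. split; [lia|]. unfold g in E.
        assert (f i <> f (S Q)) by (intros E'; apply Hno; exists i; split; auto; lia).
        assert (f j <> f (S Q)) by (intros E'; apply Hno; exists j; split; auto; lia).
        destruct (Nat.ltb_spec (f i) (f (S Q))); destruct (Nat.ltb_spec (f j) (f (S Q))); lia.
Qed.

Definition irrat (a : R) := forall (p : Z) (q : nat), (1 <= q)%nat -> INR q * a <> IZR p.

Lemma Int_part_nonneg x : 0 <= x -> (0 <= Int_part x)%Z.
Proof.
  intros H. destruct (Int_part_spec x). assert (-1 < IZR (Int_part x)) by lra.
  assert (-1 < Int_part x)%Z by (apply lt_IZR; auto). lia.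
Qed.

Lemma dirichlet a Q : irrat a -> (1 <= Q)%nat ->
  exists q p, (1 <= q)%nat /\ 0 < Rabs (INR q * a - IZR p) < / INR Q.
Proof.
  intros Hirr HQ.
  set (fr := fun i : nat => frac_part (INR i * a)).
  set (box := fun i => Z.to_nat (Int_part (INR Q * fr i))).
  assert (HQp : 0 < INR Q) by (apply (lt_INR 0); lia).
  assert (Hbox : forall i, IZR (Z.of_nat (box i)) <= INR Q * fr i < IZR (Z.of_nat (box i)) + 1).
  { intros i. unfold box. assert (F := frac_range (INR i * a)). fold (fr i) in F.
    rewrite Z2Nat.id by (apply Int_part_nonneg; nra). apply Int_part_spec. }
  destruct (pigeonhole Q box) as [i [j [Hij E]]].
  { intros i _. specialize (Hbox i). assert (F := frac_range (INR i * a)). fold (fr i) in F.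
    assert (IZR (Z.of_nat (box i)) < INR Q) by nra. rewrite <- INR_IZR_INZ in H.
    apply INR_lt. auto. }
  exists (j - i)%nat, (Int_part (INR j * a) - Int_part (INR i * a))%Z. split; [lia|].
  assert (Ed : INR (j - i) * a - IZR (Int_part (INR j * a) - Int_part (INR i * a)) = fr j - fr i).
  { unfold fr, frac_part. rewrite minus_INR by lia. rewrite minus_IZR. ring. }
  rewrite Ed. split.
  - apply Rabs_pos_lt. intros Z. apply (Hirr (Int_part (INR j * a) - Int_part (INR i * a))%Z (j - i)%nat ltac:(lia)).
    rewrite <- Ed in Z. lra.
  - assert (Hi := Hbox i). assert (Hj := Hbox j). rewrite E in Hi.
    assert (Rabs (INR Q * (fr j - fr i)) < 1) by (apply Rabs_def1; lra).
    rewrite Rabs_mult, Rabs_right in H by lra.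
    apply (Rmult_lt_reg_l (INR Q)); auto. rewrite Rinv_r; lra.
Qed.

Definition cnt (a b l : R) (n : nat) := sumf (fun k => ind (frac_part (INR k * a + b) < l)) n.

Lemma cnt_add a b l x y : cnt a b l (x + y) = cnt a b l x + cnt a (b + INR x * a) l y.
Proof.
  unfold cnt. rewrite sumf_add. f_equal. apply sumf_ext. intros j _.
  rewrite plus_INR. f_equal. f_equal. f_equal. ring.
Qed.

Lemma sumf_swap (F : nat -> nat -> R) m q :
  sumf (fun j => sumf (fun r => F j r) q) m = sumf (fun r => sumf (fun j => F j r) m) q.
Proof.
  induction m. rewrite sumf_0. rewrite (sumf_ext _ (fun _ => 0)) by (intros; apply sumf_0).
  rewrite sumf_const. ring.
  rewrite sumf_S, IHm, <- sumf_plus. apply sumf_ext. intros. rewrite sumf_S. reflexivity.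
Qed.

Lemma cnt_range a b l n : 0 <= l <= 1 -> Rabs (cnt a b l n - INR n * l) <= INR n.
Proof.
  intros Hl. induction n. unfold cnt, sumf; simpl. rewrite Rmult_0_l, Rminus_diag, Rabs_R0. lra.
  unfold cnt in *. rewrite sumf_S, S_INR.
  assert (R := ind_range (frac_part (INR n * a + b) < l)).
  apply Rabs_le. apply Rabs_le_between in IHn. lra.
Qed.

Lemma block_bound a l q p m : (1 <= q)%nat -> 0 <= l <= 1 ->
  let d := INR q * a - IZR p in
  0 < Rabs d -> INR m * Rabs d <= 1 < (INR m + 1) * Rabs d ->
  forall b, Rabs (cnt a b l (m * q) - INR (m * q) * l) <= 3 * INR q.
Proof.
  intros Hq Hl d Hd Hm b.
  assert (Dec : forall m', cnt a b l (m' * q) = sumf (fun j => cnt a (b + INR (j * q) * a) l q) m').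
  { induction m'. reflexivity. replace (S m' * q)%nat with (m' * q + q)%nat by lia.
    rewrite cnt_add, IHm', sumf_S. reflexivity. }
  rewrite Dec. unfold cnt. rewrite sumf_swap.
  rewrite (sumf_ext _ (fun r => sumf (fun j => ind (frac_part ((INR r * a + b) + INR j * d) < l)) m) q).
  2:{ intros r Hr. apply sumf_ext. intros j Hj. f_equal. f_equal.
      replace (INR r * a + (b + INR (j * q) * a)) with ((INR r * a + b + INR j * d) + IZR (Z.of_nat j * p)).
      - apply frac_shift.
      - unfold d. rewrite mult_INR, mult_IZR, <- INR_IZR_INZ. ring. }
  assert (G : forall q', (q' <= q)%nat -> Rabs (sumf (fun r => sumf (fun j => ind (frac_part ((INR r * a + b) + INR j * d) < l)) m) q' - INR (m * q') * l) <= 3 * INR q').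
  { induction q'; intros Hq'.
    - unfold sumf; simpl. rewrite Nat.mul_0_r. simpl. rewrite Rmult_0_l, Rminus_diag, Rabs_R0. lra.
    - rewrite sumf_S. specialize (IHq' ltac:(lia)).
      assert (A := AP_any d (INR q' * a + b) l m Hd Hm Hl).
      replace (m * S q')%nat with (m * q' + m)%nat by lia. rewrite plus_INR, S_INR.
      apply Rabs_le. apply Rabs_le_between in IHq'. apply Rabs_le_between in A. lra. }
  apply G. lia.
Qed.

Theorem equidist a b l : irrat a -> 0 <= l <= 1 ->
  Un_cv (fun n => cnt a b l n / INR n) l.
Proof.
  intros Hirr Hl eps He.
  destruct (INR_unbounded (6 / eps)) as [Q HQ].
  assert (HQ1 : (1 <= Q)%nat).
  { destruct Q; [|lia]. simpl in HQ. assert (0 < 6 / eps) by (apply Rdiv_lt_0_compat; lra). lra. }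
  destruct (dirichlet a Q Hirr HQ1) as [q [p [Hq [Hd1 Hd2]]]].
  set (d := INR q * a - IZR p) in *.
  set (m := Z.to_nat (Int_part (/ Rabs d))).
  assert (Hinvd : 0 < / Rabs d) by (apply Rinv_0_lt_compat; auto).
  assert (Hm : INR m <= / Rabs d < INR m + 1).
  { unfold m. rewrite INR_IZR_INZ, Z2Nat.id by (apply Int_part_nonneg; lra). apply Int_part_spec. }
  assert (Hm' : INR m * Rabs d <= 1 < (INR m + 1) * Rabs d).
  { split.
    - apply (Rmult_le_reg_r (/ Rabs d)); auto. rewrite Rmult_assoc, Rinv_r, Rmult_1_l, Rmult_1_r; lra.
    - apply (Rmult_lt_reg_r (/ Rabs d)); auto. rewrite Rmult_assoc, Rinv_r, Rmult_1_l, Rmult_1_r; lra. }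
  assert (HQd : INR Q < / Rabs d).
  { rewrite <- (Rinv_inv (INR Q)). apply Rinv_lt_contravar; auto.
    apply Rmult_lt_0_compat; auto. apply Rinv_0_lt_compat, (lt_INR 0); lia. }
  assert (HmQ : (Q <= m)%nat).
  { assert (INR Q < INR m + 1) by lra. assert (INR Q < INR (S m)) by (rewrite S_INR; lra).
    apply INR_lt in H0. lia. }
  set (P := (m * q)%nat).
  assert (HP : (1 <= P)%nat) by (unfold P; assert (1 <= m)%nat by lia; nia).
  assert (HPr : 0 < INR P) by (apply (lt_INR 0); lia).
  destruct (INR_unbounded (2 * INR P / eps)) as [n0 Hn0].
  exists (Nat.max 1 n0). intros n Hn. unfold R_dist.
  assert (Hnp : 0 < INR n) by (apply (lt_INR 0); lia).
  set (B := (n / P)%nat). set (rm := (n mod P)%nat).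
  assert (En : n = (B * P + rm)%nat) by (unfold B, rm; rewrite (Nat.div_mod_eq n P) at 1; lia).
  assert (Hrm : (rm < P)%nat) by (unfold rm; apply Nat.mod_upper_bound; lia).
  assert (BlockB : forall B' b', Rabs (cnt a b' l (B' * P) - INR (B' * P) * l) <= 3 * INR q * INR B').
  { induction B'; intros b'.
    - simpl. unfold cnt, sumf; simpl. rewrite Rmult_0_l, Rminus_diag, Rabs_R0. lra.
    - replace (S B' * P)%nat with (B' * P + m * q)%nat by (unfold P; lia).
      rewrite cnt_add, plus_INR. specialize (IHB' b').
      assert (X := block_bound a l q p m Hq Hl Hd1 Hm' (b' + INR (B' * P) * a)). fold d in X.
      rewrite S_INR. apply Rabs_le. apply Rabs_le_between in IHB'. apply Rabs_le_between in X. lra. }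
  assert (Tot : Rabs (cnt a b l n - INR n * l) <= 3 * INR q * INR B + INR rm).
  { rewrite En, cnt_add, plus_INR. specialize (BlockB B b).
    assert (X := cnt_range a (b + INR (B * P) * a) l rm Hl).
    apply Rabs_le. apply Rabs_le_between in BlockB. apply Rabs_le_between in X. lra. }
  assert (HB : INR B * INR P <= INR n) by (rewrite En, plus_INR, mult_INR; assert (0 <= INR rm) by apply pos_INR; lra).
  assert (Hm0 : 0 < INR m) by (apply (lt_INR 0); lia).
  assert (T1 : 3 * INR q * INR B <= 3 * INR n / INR m).
  { unfold P in HB. rewrite mult_INR in HB. apply (Rmult_le_reg_r (INR m)); auto.
    replace (3 * INR n / INR m * INR m) with (3 * INR n) by (field; lra). nra. }
  assert (T2 : 3 * INR n / INR m <= eps / 2 * INR n).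
  { assert (6 / eps < INR m) by (assert (INR Q <= INR m) by (apply le_INR; lia); lra).
    apply (Rmult_le_reg_r (INR m)); auto.
    replace (3 * INR n / INR m * INR m) with (3 * INR n) by (field; lra).
    assert (6 < eps * INR m).
    { apply (Rmult_lt_reg_r (/ eps)). apply Rinv_0_lt_compat; lra.
      replace (eps * INR m * / eps) with (INR m) by (field; lra). lra. }
    nra. }
  assert (T3 : INR rm < eps / 2 * INR n).
  { assert (INR rm < INR P) by (apply lt_INR; auto).
    assert (2 * INR P / eps < INR n).
    { assert (INR n0 <= INR n) by (apply le_INR; lia). lra. }
    assert (2 * INR P < eps * INR n).
    { apply (Rmult_lt_reg_r (/ eps)). apply Rinv_0_lt_compat; lra.
      replace (eps * INR n * / eps) with (INR n) by (field; lra). unfold Rdiv in H0. lra. }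
    lra. }
  replace (cnt a b l n / INR n - l) with ((cnt a b l n - INR n * l) / INR n) by (field; lra).
  unfold Rdiv. rewrite Rabs_mult, Rabs_inv, (Rabs_right (INR n)) by lra.
  apply (Rmult_lt_reg_r (INR n)); auto. rewrite Rmult_assoc, Rinv_l, Rmult_1_r by lra.
  lra.
Qed.


Lemma ln_cont x : 0 < x -> continuity_pt ln x.
Proof.
  intros H. apply derivable_continuous_pt. exists (/ x). apply derivable_pt_lim_ln. auto.
Qed.

Lemma ln_lim (u : nat -> R) l : 0 < l -> Un_cv u l -> Un_cv (fun n => ln (u n)) (ln l).
Proof. intros H Hu. apply continuity_seq; auto. apply ln_cont; auto. Qed.

Lemma ln_le' x y : 0 < x -> x <= y -> ln x <= ln y.
Proof. intros H1 H2. destruct H2 as [H2|H2]. left; apply ln_increasing; auto. subst; lra. Qed.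

Lemma arc_in y l : (exists Z, IZR Z <= y < IZR Z + l) -> frac_part y < l.
Proof.
  intros [z0 HZ]. destruct (Rlt_or_le y (IZR z0 + 1)) as [H|H].
  - rewrite (frac_unique y z0) by lra. lra.
  - assert (F := frac_range y). lra.
Qed.

Lemma arc_out y l : frac_part y < l -> exists Z, IZR Z <= y < IZR Z + l.
Proof. intros H. exists (Int_part y). unfold frac_part in H. destruct (Int_part_spec y). lra. Qed.

Lemma frac_lt_max y l : frac_part y < l <-> frac_part y < Rmax 0 l.
Proof.
  assert (F := frac_range y). unfold Rmax. destruct (Rle_dec 0 l); split; intros; lra.
Qed.

Lemma frac_lt_min y l : 0 <= l -> (frac_part y < l <-> frac_part y < Rmin 1 l).
Proof.
  intros Hl. assert (F := frac_range y). unfold Rmin. destruct (Rle_dec 1 l); split; intros; lra.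
Qed.

Lemma sumf_diff_tail (A lo : nat -> R) n1 :
  (forall k, (n1 <= k)%nat -> lo k <= A k) -> (forall k, 0 <= A k) -> (forall k, lo k <= 1) ->
  forall n, sumf lo n - INR n1 <= sumf A n.
Proof.
  intros H1 H2 H3.
  assert (G : forall n, sumf lo n - INR (Nat.min n n1) <= sumf A n).
  { induction n. rewrite !sumf_0. simpl. lra.
    rewrite !sumf_S. destruct (Nat.le_gt_cases n1 n) as [Hle|Hgt].
    - replace (Nat.min (S n) n1) with (Nat.min n n1) by lia. specialize (H1 n Hle). lra.
    - replace (Nat.min (S n) n1) with (S (Nat.min n n1)) by lia. rewrite S_INR.
      specialize (H2 n). specialize (H3 n). lra. }
  intros n. specialize (G n). assert (INR (Nat.min n n1) <= INR n1) by (apply le_INR; lia). lra.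
Qed.

Lemma sumf_diff_tail' (A hi : nat -> R) n1 :
  (forall k, (n1 <= k)%nat -> A k <= hi k) -> (forall k, A k <= 1) -> (forall k, 0 <= hi k) ->
  forall n, sumf A n <= sumf hi n + INR n1.
Proof.
  intros H1 H2 H3.
  assert (G : forall n, sumf A n <= sumf hi n + INR (Nat.min n n1)).
  { induction n. rewrite !sumf_0. simpl. lra.
    rewrite !sumf_S. destruct (Nat.le_gt_cases n1 n) as [Hle|Hgt].
    - replace (Nat.min (S n) n1) with (Nat.min n n1) by lia. specialize (H1 n Hle). lra.
    - replace (Nat.min (S n) n1) with (S (Nat.min n n1)) by lia. rewrite S_INR.
      specialize (H2 n). specialize (H3 n). lra. }
  intros n. specialize (G n). assert (INR (Nat.min n n1) <= INR n1) by (apply le_INR; lia). lra.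
Qed.

Lemma squeeze_density (A : nat -> R) (target : R) :
  (forall k, 0 <= A k <= 1) ->
  (forall eps, 0 < eps -> exists (lo hi : nat -> R) (n1 : nat) (Llo Lhi : R),
     (forall k, (n1 <= k)%nat -> lo k <= A k <= hi k) /\
     (forall k, lo k <= 1 /\ 0 <= hi k) /\
     Un_cv (fun n => sumf lo n / INR n) Llo /\ Un_cv (fun n => sumf hi n / INR n) Lhi /\
     target - eps <= Llo /\ Lhi <= target + eps) ->
  Un_cv (fun n => sumf A n / INR n) target.
Proof.
  intros HA H e He.
  destruct (H (e / 4) ltac:(lra)) as [lo [hi [n1 [Llo [Lhi [Hb [Hr [Clo [Chi [Tl Th']]]]]]]]]].
  destruct (Clo (e / 4) ltac:(lra)) as [M1 HM1].
  destruct (Chi (e / 4) ltac:(lra)) as [M2 HM2].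
  destruct (INR_unbounded (4 * INR n1 / e)) as [M3 HM3].
  exists (Nat.max 1 (Nat.max M1 (Nat.max M2 M3))). intros n Hn.
  specialize (HM1 n ltac:(lia)). specialize (HM2 n ltac:(lia)).
  unfold R_dist in *.
  assert (Hnp : 0 < INR n) by (apply (lt_INR 0); lia).
  assert (L1 := sumf_diff_tail A lo n1 (fun k Hk => proj1 (Hb k Hk)) (fun k => proj1 (HA k)) (fun k => proj1 (Hr k)) n).
  assert (L2 := sumf_diff_tail' A hi n1 (fun k Hk => proj2 (Hb k Hk)) (fun k => proj2 (HA k)) (fun k => proj2 (Hr k)) n).
  assert (Hn1 : INR n1 / INR n < e / 4).
  { assert (4 * INR n1 / e < INR n) by (assert (INR M3 <= INR n) by (apply le_INR; lia); lra).
    apply (Rmult_lt_reg_r (INR n)); auto. replace (INR n1 / INR n * INR n) with (INR n1) by (field; lra).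
    apply (Rmult_lt_reg_r (4 / e)). apply Rdiv_lt_0_compat; lra.
    replace (e / 4 * INR n * (4 / e)) with (INR n) by (field; lra).
    replace (INR n1 * (4 / e)) with (4 * INR n1 / e) by (field; lra). lra. }
  assert (D1 : sumf lo n / INR n - INR n1 / INR n <= sumf A n / INR n).
  { replace (sumf lo n / INR n - INR n1 / INR n) with ((sumf lo n - INR n1) / INR n) by (field; lra).
    unfold Rdiv. apply Rmult_le_compat_r; auto. left; apply Rinv_0_lt_compat; auto. }
  assert (D2 : sumf A n / INR n <= sumf hi n / INR n + INR n1 / INR n).
  { replace (sumf hi n / INR n + INR n1 / INR n) with ((sumf hi n + INR n1) / INR n) by (field; lra).
    unfold Rdiv. apply Rmult_le_compat_r; auto. left; apply Rinv_0_lt_compat; auto. }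
  apply Rabs_def2 in HM1. apply Rabs_def2 in HM2.
  apply Rabs_def1; lra.
Qed.


Lemma floor_nat_spec x : 0 <= x -> INR (floor_nat x) <= x < INR (floor_nat x) + 1.
Proof.
  intros H. unfold floor_nat. rewrite INR_IZR_INZ, Z2Nat.id by (apply Int_part_nonneg; auto).
  apply Int_part_spec.
Qed.

Lemma pow_bern g n : 1 < g -> 1 + INR n * (g - 1) <= g ^ n.
Proof.
  intros Hg. induction n. simpl. lra.
  rewrite S_INR. simpl. assert (1 <= g ^ n) by (apply pow_R1_Rle; lra). nra.
Qed.

Lemma K_ge1 g n : 1 < g -> (1 <= floor_nat (g ^ n))%nat.
Proof.
  intros Hg. assert (1 <= g ^ n) by (apply pow_R1_Rle; lra).
  destruct (floor_nat_spec (g ^ n) ltac:(lra)) as [A B].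
  assert (0 < INR (floor_nat (g ^ n))) by lra.
  destruct (floor_nat (g ^ n)); [simpl in *; lra|lia].
Qed.

Lemma K_log_lim g : 1 < g ->
  Un_cv (fun n => ln (INR (floor_nat (g ^ n))) - INR n * ln g) 0.
Proof.
  intros Hg.
  assert (Hr : Un_cv (fun n => INR (floor_nat (g ^ n)) / g ^ n) 1).
  { intros e He.
    assert (Hab : Rabs (/ g) < 1).
    { rewrite Rabs_right by (left; apply Rinv_0_lt_compat; lra).
      rewrite <- Rinv_1. apply Rinv_lt_contravar; lra. }
    destruct (pow_lt_1_zero (/ g) Hab e He) as [M HM].
    exists M. intros n Hn. unfold R_dist. specialize (HM n Hn).
    assert (Hgn : 1 <= g ^ n) by (apply pow_R1_Rle; lra).
    destruct (floor_nat_spec (g ^ n) ltac:(lra)) as [A B].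
    rewrite <- Rinv_pow in HM by lra. rewrite Rabs_right in HM by (left; apply Rinv_0_lt_compat; lra).
    replace (INR (floor_nat (g ^ n)) / g ^ n - 1) with ((INR (floor_nat (g ^ n)) - g ^ n) * / g ^ n) by (field; lra).
    rewrite Rabs_mult, Rabs_right with (r := / g ^ n) by (left; apply Rinv_0_lt_compat; lra).
    assert (Rabs (INR (floor_nat (g ^ n)) - g ^ n) <= 1) by (apply Rabs_le; lra).
    assert (0 < / g ^ n) by (apply Rinv_0_lt_compat; lra).
    assert (0 <= Rabs (INR (floor_nat (g ^ n)) - g ^ n)) by apply Rabs_pos. nra. }
  assert (Hl := ln_lim _ 1 ltac:(lra) Hr). rewrite ln_1 in Hl.
  intros e He. destruct (Hl e He) as [M HM]. exists M. intros n Hn. specialize (HM n Hn).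
  unfold R_dist in *. 
  assert (Hgn : 1 <= g ^ n) by (apply pow_R1_Rle; lra).
  assert (HK := K_ge1 g n Hg). assert (0 < INR (floor_nat (g ^ n))) by (apply (lt_INR 0); lia).
  unfold Rdiv in HM. rewrite ln_mult, ln_Rinv, ln_pow in HM by (try apply Rinv_0_lt_compat; lra).
  rewrite Rminus_0_r. rewrite Rminus_0_r in HM. replace (ln (INR (floor_nat (g ^ n))) - INR n * ln g)
    with (ln (INR (floor_nat (g ^ n))) + - (INR n * ln g)) by ring. auto.
Qed.

Lemma alpha_irrat g L psi : 1 < g -> admissible L -> is_psi L psi ->
  (forall r : Q, g <> Rpower psi (Q2R r)) -> irrat (ln g / ln psi).
Proof.
  intros Hg Hadm Hpsi Hnr p q Hq E.
  assert (Hp1 := psi_gt1 L psi Hadm Hpsi).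
  assert (Hlp : 0 < ln psi) by (rewrite <- ln_1; apply ln_increasing; lra).
  destruct q as [|q']; [lia|].
  apply (Hnr (p # Pos.of_succ_nat q')%Q).
  unfold Rpower, Q2R. cbn [Qnum Qden].
  replace (IZR (Z.pos (Pos.of_succ_nat q'))) with (INR (S q')).
  2:{ rewrite INR_IZR_INZ. reflexivity. }
  assert (0 < INR (S q')) by (apply (lt_INR 0); lia).
  replace (IZR p * / INR (S q') * ln psi) with (ln g).
  - rewrite exp_ln; lra.
  - rewrite <- E. field. lra.
Qed.

Lemma hd_lower L w : (2 <= length L)%nat -> (0 < hd 0%nat w)%nat -> (Hn L (length w) <= Vs L w 0)%nat.
Proof.
  intros HN Hh. destruct w as [|d w]; simpl in *. lia.
  replace (length w + 0 + 1)%nat with (S (length w)) by lia. nia.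
Qed.

Lemma log_asym (X : nat -> nat) psi c q S0 : 1 < psi -> 0 < c -> 0 < q ->
  (forall M, (S0 <= M)%nat -> (1 <= X M)%nat) ->
  Un_cv (fun r => INR (X (S0 + r)%nat) * (/ psi) ^ (S0 + r)) (c * q) ->
  forall e, 0 < e -> exists M0, (S0 <= M0)%nat /\ forall M, (M0 <= M)%nat ->
    Rabs (ln (INR (X M)) - INR M * ln psi - ln c - ln q) < e.
Proof.
  intros Hp Hc Hq HX Hcv e He.
  assert (Hl := ln_lim _ (c * q) ltac:(nra) Hcv).
  destruct (Hl e He) as [M1 HM1]. exists (S0 + M1)%nat. split; [lia|].
  intros M HM. specialize (HM1 (M - S0)%nat ltac:(lia)). unfold R_dist in HM1.
  replace (S0 + (M - S0))%nat with M in HM1 by lia.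
  assert (0 < INR (X M)) by (apply (lt_INR 0); apply HX; lia).
  rewrite ln_mult, ln_pow, ln_Rinv, ln_mult in HM1 by (try apply pow_lt; try apply Rinv_0_lt_compat; lra).
  replace (ln (INR (X M)) - INR M * ln psi - ln c - ln q) with (ln (INR (X M)) + INR M * - ln psi - (ln c + ln q)) by ring.
  auto.
Qed.

Lemma hd_ext s w M : (1 <= s)%nat -> hd 0%nat (ext s w M) = hd 0%nat w.
Proof. intros H. destruct s; [lia|]. unfold ext. destruct w; simpl; auto. destruct (M - S s)%nat; reflexivity. Qed.

Lemma Un_cv_ext (u v : nat -> R) l : (forall n, u n = v n) -> Un_cv u l -> Un_cv v l.
Proof. intros E H e He. destruct (H e He) as [M HM]. exists M. intros n Hn. rewrite <- E. auto. Qed.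

Theorem benford_core g L psi s b b' :
  1 < g -> (forall r : Q, g <> Rpower psi (Q2R r)) -> admissible L -> is_psi L psi ->
  (1 <= s)%nat -> Hs L s b -> succ_block L s b b' ->
  Un_cv (fun n => INR (count_LB L s b (fun n => floor_nat (g ^ n)) n) / INR n)
        (log_base psi (dotH (/ psi) b' / dotH (/ psi) b)).
Proof.
  intros Hg Hnr Hadm Hpsi Hs1 Hb Hsucc.
  assert (HN : (2 <= length L)%nat) by apply Hadm.
  assert (Hp1 := psi_gt1 L psi Hadm Hpsi).
  set (lp := ln psi).
  assert (Hlp : 0 < lp) by (unfold lp; rewrite <- ln_1; apply ln_increasing; lra).
  set (t := / psi).
  assert (Ht : 0 < t) by (unfold t; apply Rinv_0_lt_compat; lra).
  assert (Htp : t * psi = 1) by (unfold t; field; lra).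
  destruct (H_asym L psi Hadm Hpsi) as [c [Hc0 Hcv]]. fold t in Hcv.
  set (K := fun n => floor_nat (g ^ n)).
  set (N := length L) in *.
  set (S' := (s + (N - s))%nat).
  assert (HS' : (1 <= S')%nat) by (unfold S'; lia).
  destruct (Hs_word L s b Hb) as [wb [Hwb [Hhb [Hsb Eb]]]].
  assert (Lb : length b = S') by (rewrite Eb; apply blk_length; auto).
  assert (Lb' : length b' = S').
  { destruct Hsucc as [[Hb'1 _]|[_ E]].
    - destruct (Hs_word L s b' Hb'1) as [w' [_ [_ [Hs' E']]]]. rewrite E'. apply blk_length; auto.
    - rewrite E. apply (excl_value L s S' Hadm Hs1). unfold S'; lia. }
  set (Vb := fun M => Vs L b (M - S')).
  set (Vb' := fun M => Vs L b' (M - S')).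
  assert (Bnd : forall M, (S' <= M)%nat -> (Hn L M <= Vb M /\ Vb M <= Vb' M /\ Vb' M <= Hn L (S M))%nat).
  { intros M HM. set (eps := ext s wb M).
    assert (Ha : acc L 0 eps) by (apply acc_ext; auto).
    assert (Hl : length eps = M) by (apply ext_length; unfold S' in *; lia).
    assert (Hh : (0 < hd 0%nat eps)%nat) by (unfold eps; rewrite hd_ext; auto).
    assert (Hbl : blk L s eps = b).
    { rewrite Eb. unfold blk, eps. rewrite firstn_ext by auto. reflexivity. }
    assert (BC := proj1 (block_char L s b b' eps Hadm Hs1 Hb Hsucc Ha Hh ltac:(rewrite Hl; unfold S' in *; lia)) Hbl).
    rewrite Hl, Lb, Lb' in BC. fold (Vb M) (Vb' M) in BC.
    assert (Ev : Vs L eps 0 = Vb M).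
    { unfold eps, Vb. rewrite Vs_ext_blk by (auto; unfold S' in *; lia). rewrite <- Eb, Lb. reflexivity. }
    assert (HL := hd_lower L eps HN Hh). rewrite Hl in HL.
    split; [lia|]. split; [lia|].
    destruct Hsucc as [[Hb'1 _]|[_ E]].
    - destruct (Hs_word L s b' Hb'1) as [w' [Hw' [Hh' [Hs' E']]]].
      assert (X := acc_lt_H L (ext s w' M) HN (acc_ext L s w' M Hw')).
      rewrite ext_length in X by (unfold S' in *; lia).
      assert (Vs L (ext s w' M) 0 = Vb' M).
      { unfold Vb'. rewrite Vs_ext_blk by (auto; unfold S' in *; lia). rewrite <- E', Lb'. reflexivity. }
      lia.
    - unfold Vb'. rewrite E. destruct (excl_value L s M Hadm Hs1 ltac:(unfold S' in *; lia)) as [_ X].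
      unfold S', N. lia. }
  assert (LH : Un_cv (fun r => INR (Hn L (S' + r)%nat) * t ^ (S' + r)) (c * 1)).
  { rewrite Rmult_1_r. apply Un_cv_ext with (u := fun r => Gs L t (r + S')%nat).
    intros r. unfold Gs. rewrite Nat.add_comm. reflexivity. apply Un_cv_shift'. auto. }
  assert (LH1 : Un_cv (fun r => INR (Hn L (S (S' + r))) * t ^ (S' + r)) (c * psi)).
  { apply Un_cv_ext with (u := fun r => Gs L t (r + S (S'))%nat * psi).
    - intros r. unfold Gs. replace (r + S S')%nat with (S (S' + r)) by lia. simpl.
      replace (INR (Hn L (S (S' + r))) * (t * t ^ (S' + r)) * psi)
        with (INR (Hn L (S (S' + r))) * t ^ (S' + r) * (t * psi)) by ring. rewrite Htp. ring.
    - apply CV_mult. apply Un_cv_shift'. auto.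
      intros e He. exists 0%nat. intros. unfold R_dist. rewrite Rminus_diag, Rabs_R0. lra. }
  assert (LVb : Un_cv (fun r => INR (Vb (S' + r)%nat) * t ^ (S' + r)) (c * dotH t b)).
  { apply Un_cv_ext with (u := fun r => INR (Vs L b r) * t ^ (length b + r)).
    - intros r. unfold Vb. rewrite Lb. f_equal. f_equal. f_equal. lia.
    - apply Vs_asym. auto. }
  assert (LVb' : Un_cv (fun r => INR (Vb' (S' + r)%nat) * t ^ (S' + r)) (c * dotH t b')).
  { apply Un_cv_ext with (u := fun r => INR (Vs L b' r) * t ^ (length b' + r)).
    - intros r. unfold Vb'. rewrite Lb'. f_equal. f_equal. f_equal. lia.
    - apply Vs_asym. auto. }
  assert (Cmp : forall (X Y : nat -> nat) l1 l2, (forall r, (X (S' + r) <= Y (S' + r))%nat) ->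
            Un_cv (fun r => INR (X (S' + r)%nat) * t ^ (S' + r)) l1 ->
            Un_cv (fun r => INR (Y (S' + r)%nat) * t ^ (S' + r)) l2 -> l1 <= l2).
  { intros X Y l1 l2 HXY C1 C2. eapply Rle_cv_lim; [|exact C1|exact C2].
    intros r. apply Rmult_le_compat_r. apply pow_le; lra. apply le_INR. auto. }
  set (db := dotH t b). set (db' := dotH t b').
  assert (I1 : c * 1 <= c * db).
  { apply (Cmp (Hn L) Vb); auto. intros r. apply Bnd. lia. }
  assert (I2 : c * db <= c * db').
  { apply (Cmp Vb Vb'); auto. intros r. apply Bnd. lia. }
  assert (I3 : c * db' <= c * psi).
  { apply (Cmp Vb' (fun M => Hn L (S M))); auto. intros r. apply Bnd. lia. }
  assert (Hdb : 1 <= db) by nra. assert (Hdb2 : db <= db') by nra. assert (Hdb3 : db' <= psi) by nra.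
  set (u := ln db / lp). set (v := ln db' / lp).
  assert (Eu : u * lp = ln db) by (unfold u; field; lra).
  assert (Ev : v * lp = ln db') by (unfold v; field; lra).
  assert (Hu0 : 0 <= u).
  { unfold u. apply Rmult_le_pos. rewrite <- ln_1. apply ln_le'; lra. left; apply Rinv_0_lt_compat; lra. }
  assert (Huv : u <= v).
  { unfold u, v. unfold Rdiv. apply Rmult_le_compat_r. left; apply Rinv_0_lt_compat; lra. apply ln_le'; lra. }
  assert (Hv1 : v <= 1).
  { unfold v. apply (Rmult_le_reg_r lp); auto. unfold Rdiv. rewrite Rmult_assoc, Rinv_l, Rmult_1_r, Rmult_1_l by lra.
    unfold lp. apply ln_le'; lra. }
  assert (Target : log_base psi (db' / db) = v - u).
  { unfold log_base. replace (ln (db' / db)) with (ln db' - ln db).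
    - unfold u, v. fold lp. field. lra.
    - unfold Rdiv. rewrite ln_mult, ln_Rinv by (try apply Rinv_0_lt_compat; lra). ring. }
  rewrite Target.
  set (alpha := ln g / lp). set (beta := - ln c / lp).
  assert (Hirr : irrat alpha) by (apply (alpha_irrat g L psi); auto).
  assert (HK1 : forall n, (1 <= K n)%nat) by (intros n; apply K_ge1; auto).
  assert (Kbig : forall X : nat, exists n3, forall n, (n3 <= n)%nat -> (X <= K n)%nat).
  { intros X. destruct (INR_unbounded ((INR X + 1) / (g - 1))) as [n3 Hn3]. exists n3. intros n Hn.
    assert (B := pow_bern g n Hg). destruct (floor_nat_spec (g ^ n) ltac:(assert (1 <= g ^ n) by (apply pow_R1_Rle; lra); lra)) as [_ F].
    assert (INR n3 <= INR n) by (apply le_INR; auto).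
    assert ((INR X + 1) / (g - 1) * (g - 1) = INR X + 1) by (field; lra).
    assert (INR X + 1 <= INR n * (g - 1)) by nra.
    assert (INR X < INR (K n)) by (unfold K; lra). apply INR_lt in H2. lia. }
  assert (HH1 : forall M, (S' <= M)%nat -> (1 <= Hn L M)%nat) by (intros M HM; assert (X := H_ge L M Hadm); lia).
  assert (D : forall eps, 0 < eps -> exists n1, forall n, (n1 <= n)%nat ->
    (LB L s (K n) b -> exists z, IZR z + u - eps <= INR n * alpha + beta < IZR z + v + eps) /\
    ((exists z, IZR z + u + eps <= INR n * alpha + beta < IZR z + v - eps) -> LB L s (K n) b)).
  { intros eps He. set (e' := eps * lp / 2). assert (He' : 0 < e') by (unfold e'; nra).
    destruct (log_asym (Hn L) psi c 1 S' Hp1 Hc0 ltac:(lra) HH1 LH e' He') as [M1 [HM1a HM1]].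
    destruct (log_asym (fun M => Hn L (S M)) psi c psi S' Hp1 Hc0 ltac:(lra)
                (fun M HM => HH1 (S M) ltac:(lia)) LH1 e' He') as [M2 [HM2a HM2]].
    destruct (log_asym Vb psi c db S' Hp1 Hc0 ltac:(lra)
                (fun M HM => Nat.le_trans _ _ _ (HH1 M HM) (proj1 (Bnd M HM))) LVb e' He') as [M3 [HM3a HM3]].
    destruct (log_asym Vb' psi c db' S' Hp1 Hc0 ltac:(lra)
                (fun M HM => Nat.le_trans _ _ _ (HH1 M HM) (Nat.le_trans _ _ _ (proj1 (Bnd M HM)) (proj1 (proj2 (Bnd M HM))))) LVb' e' He') as [M4 [HM4a HM4]].
    set (M0 := Nat.max (Nat.max M1 M2) (Nat.max M3 M4)).
    destruct (K_log_lim g Hg e' He') as [n2 Hn2].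
    destruct (Kbig (Hn L M0)) as [n3 Hn3].
    exists (Nat.max n2 n3). intros n Hnn.
    specialize (Hn2 n ltac:(lia)). unfold R_dist in Hn2. rewrite Rminus_0_r in Hn2.
    apply Rabs_def2 in Hn2. fold (K n) in Hn2.
    specialize (Hn3 n ltac:(lia)).
    assert (HKp : 0 < INR (K n)) by (apply (lt_INR 0); specialize (HK1 n); lia).
    assert (Eab : INR n * alpha + beta = (INR n * ln g - ln c) / lp) by (unfold alpha, beta; field; lra).
    assert (Len : forall w, acc L 0 w -> Vs L w 0 = K n -> (M0 <= length w)%nat).
    { intros w Hw Hv. assert (X := acc_lt_H L w HN Hw).
      destruct (Nat.le_gt_cases M0 (length w)) as [H|H]; auto.
      assert (Hn L (S (length w)) <= Hn L M0)%nat by (apply H_mono; auto; lia). lia. }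
    assert (lnle : forall x y : nat, (1 <= x)%nat -> (x <= y)%nat -> ln (INR x) <= ln (INR y)).
    { intros x y Hx Hxy. apply ln_le'. apply (lt_INR 0). lia. apply le_INR; auto. }
    assert (lnlt : forall x y : nat, (1 <= x)%nat -> (x < y)%nat -> ln (INR x) < ln (INR y)).
    { intros x y Hx Hxy. apply ln_increasing. apply (lt_INR 0). lia. apply lt_INR; auto. }
    assert (divle : forall x y, x * lp <= y -> x <= y / lp).
    { intros x y H. apply (Rmult_le_reg_r lp); auto. replace (y / lp * lp) with y by (field; lra). auto. }
    assert (divlt : forall x y, y < x * lp -> y / lp < x).
    { intros x y H. apply (Rmult_lt_reg_r lp); auto. replace (y / lp * lp) with y by (field; lra). auto. }
    assert (lnpsi : ln psi = lp) by reflexivity.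
    split.
    - intros [eps0 [[[Hc Hh] Hv] [Hs E]]].
      apply Hcirc_iff in Hc. rewrite Hvalue_Vs in Hv.
      assert (HM := Len eps0 Hc (eq_sym Hv)). set (M := length eps0) in *.
      assert (Hbl : blk L s eps0 = b) by (rewrite E; reflexivity).
      assert (BC := proj1 (block_char L s b b' eps0 Hadm Hs1 Hb Hsucc Hc Hh ltac:(unfold M0, S' in *; lia)) Hbl).
      fold M in BC. rewrite Lb, Lb' in BC. fold (Vb M) (Vb' M) in BC.
      assert (B1 := Bnd M ltac:(lia)). assert (Hh1 := HH1 M ltac:(lia)).
      assert (L1 : ln (INR (Vb M)) <= ln (INR (K n))) by (apply lnle; lia).
      assert (L2 : ln (INR (K n)) < ln (INR (Vb' M))) by (apply lnlt; lia).
      specialize (HM3 M ltac:(unfold M0 in *; lia)). specialize (HM4 M ltac:(unfold M0 in *; lia)).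
      apply Rabs_def2 in HM3. apply Rabs_def2 in HM4.
      exists (Z.of_nat M). rewrite <- INR_IZR_INZ. rewrite Eab. split.
      + apply divle. assert (2 * e' = eps * lp) by (unfold e'; field). nra.
      + apply divlt. assert (2 * e' = eps * lp) by (unfold e'; field). nra.
    - intros [z [Z1 Z2]]. rewrite Eab in Z1, Z2.
      assert (Z1' : (IZR z + u + eps) * lp <= INR n * ln g - ln c).
      { apply (Rmult_le_compat_r lp) in Z1; [|lra]. replace ((INR n * ln g - ln c) / lp * lp) with (INR n * ln g - ln c) in Z1 by (field; lra). auto. }
      assert (Z2' : INR n * ln g - ln c < (IZR z + v - eps) * lp).
      { apply (Rmult_lt_compat_r lp) in Z2; [|lra]. replace ((INR n * ln g - ln c) / lp * lp) with (INR n * ln g - ln c) in Z2 by (field; lra). auto. }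
      destruct (expansion_exists L (K n) Hadm (HK1 n)) as [eps0 [Hc [Hh [Hv HHl]]]].
      assert (HM := Len eps0 Hc Hv). set (M := length eps0) in *.
      assert (Hlt := acc_lt_H L eps0 HN Hc). fold M in Hlt. rewrite Hv in Hlt.
      assert (Hh1 := HH1 M ltac:(unfold M0 in *; lia)).
      specialize (HM1 M ltac:(unfold M0 in *; lia)). specialize (HM2 M ltac:(unfold M0 in *; lia)).
      specialize (HM3 M ltac:(unfold M0 in *; lia)). specialize (HM4 M ltac:(unfold M0 in *; lia)).
      rewrite ln_1 in HM1. rewrite lnpsi in HM2.
      apply Rabs_def2 in HM1. apply Rabs_def2 in HM2. apply Rabs_def2 in HM3. apply Rabs_def2 in HM4.
      assert (L1 : ln (INR (Hn L M)) <= ln (INR (K n))) by (apply lnle; lia).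
      assert (L2 : ln (INR (K n)) < ln (INR (Hn L (S M)))) by (apply lnlt; lia).
      assert (He2 : 2 * e' = eps * lp) by (unfold e'; field).
      assert (ZM1 : IZR z + u < INR M + 1).
      { apply (Rmult_lt_reg_r lp); auto. nra. }
      assert (ZM2 : INR M < IZR z + v).
      { apply (Rmult_lt_reg_r lp); auto. nra. }
      assert (Ez : IZR z = INR M).
      { rewrite INR_IZR_INZ in *. assert (A1 : (z < Z.of_nat M + 1)%Z) by (apply lt_IZR; rewrite plus_IZR; simpl; lra).
        assert (A2 : (Z.of_nat M < z + 1)%Z) by (apply lt_IZR; rewrite plus_IZR; simpl; lra).
        f_equal. lia. }
      rewrite Ez in Z1', Z2'.
      assert (B1 := Bnd M ltac:(unfold M0 in *; lia)).
      assert (Lo : (Vb M <= K n)%nat).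
      { destruct (Nat.le_gt_cases (Vb M) (K n)) as [H|H]; auto. exfalso.
        assert (ln (INR (K n)) < ln (INR (Vb M))) by (apply lnlt; auto).
        nra. }
      assert (Up : (K n < Vb' M)%nat).
      { destruct (Nat.lt_ge_cases (K n) (Vb' M)) as [H|H]; auto. exfalso.
        assert (ln (INR (Vb' M)) <= ln (INR (K n))) by (apply lnle; lia).
        nra. }
      assert (Hbl : blk L s eps0 = b).
      { apply (block_char L s b b' eps0 Hadm Hs1 Hb Hsucc Hc Hh ltac:(unfold M0, S' in *; lia)).
        fold M. rewrite Lb, Lb'. fold (Vb M) (Vb' M). rewrite Hv. lia. }
      exists eps0. split; [split; [split; auto; apply Hcirc_iff; auto|rewrite Hvalue_Vs; auto]|].
      split. unfold M0, S' in *; lia. rewrite <- Hbl. reflexivity. }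
  set (A := fun k => ind (LB L s (K (S k)) b)).
  apply Un_cv_ext with (u := fun n => sumf A n / INR n).
  { intros n. f_equal. unfold count_LB. rewrite sumR_INR. unfold sumf, A, ind.
    rewrite <- seq_shift, map_map. reflexivity. }
  apply squeeze_density.
  - intros k. apply ind_range.
  - intros e He. destruct (D (e / 2) ltac:(lra)) as [n1 Hn1].
    set (lmin := Rmax 0 (v - u - 2 * (e / 2))). set (lmax := Rmin 1 (v - u + 2 * (e / 2))).
    assert (Hlmin : 0 <= lmin <= 1).
    { unfold lmin, Rmax. destruct (Rle_dec 0 (v - u - 2 * (e / 2))); lra. }
    assert (Hlmax : 0 <= lmax <= 1).
    { unfold lmax, Rmin. destruct (Rle_dec 1 (v - u + 2 * (e / 2))); lra. }
    exists (fun k => ind (frac_part (INR k * alpha + (beta + alpha - (u + e / 2))) < lmin)),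
           (fun k => ind (frac_part (INR k * alpha + (beta + alpha - (u - e / 2))) < lmax)), n1, lmin, lmax.
    split; [|split; [|split; [|split; [|split]]]].
    + intros k Hk. destruct (Hn1 (S k) ltac:(lia)) as [Hi Hii]. split.
      * apply ind_le. intros Hf. unfold A. apply Hii.
        apply (proj2 (frac_lt_max _ _)) in Hf. apply arc_out in Hf. destruct Hf as [z Hz].
        exists z. rewrite S_INR. lra.
      * apply ind_le. intros HL. destruct (Hi HL) as [z Hz].
        apply (proj1 (frac_lt_min _ (v - u + 2 * (e / 2)) ltac:(lra))). apply arc_in. exists z. rewrite S_INR in Hz. lra.
    + intros k. split; apply ind_range.
    + apply (equidist alpha (beta + alpha - (u + e / 2)) lmin Hirr Hlmin).
    + apply (equidist alpha (beta + alpha - (u - e / 2)) lmax Hirr Hlmax).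
    + unfold lmin. replace (v - u - e) with (v - u - 2 * (e / 2)) by field. apply Rmax_r.
    + unfold lmax. replace (v - u + e) with (v - u + 2 * (e / 2)) by field. apply Rmin_r.
Qed.

Theorem theorem6p16 (gamma : R) :
  (1 < gamma)%R ->
  (forall (L : list nat) (psi : R) (r : Q),
      admissible L -> is_psi L psi -> gamma <> Rpower psi (Q2R r)) ->
  absolute_benford (fun n => floor_nat (gamma ^ n)%R).
Proof.
  intros Hg Hnr L psi Hadm Hpsi s b b' Hs1 Hb Hsucc.
  apply (benford_core gamma L psi s b b'); auto. intros r. apply (Hnr L psi r); auto.
Qed.
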